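(* Let $\Omega\subset\mathbb{R}^n$ be a bounded open convex set with smooth boundary. If for some $\Lambda>0$ problem $(N_\Lambda)$ admits a nonconstant continuous viscosity solution $u$, then $\Lambda\ge\frac{2}{\operatorname{diam}(\Omega)}$.
   Context: $\operatorname{diam}(\Omega)=\sup_{x,y\in\Omega}|x-y|$. $\nu$ denotes the outer unit normal to $\partial\Omega$, and $\Delta_\infty u=\sum_{i,j=1}^n u_{x_i}u_{x_ix_j}u_{x_j}$. For $\Lambda\ge 0$, problem $(N_\Lambda)$ is $$\min\{|\nabla u|-\Lambda|u|,-\Delta_\infty u\}=0 \text{ in }\{u>0\}\cap\Omega,\quad \max\{\Lambda|u|-|\nabla u|,-\Delta_\infty u\}=0 \text{ in }\{u<0\}\cap\Omega,\quad -\Delta_\infty u=0 \text{ in }\{u=0\}\cap\Omega,\quad \tfrac{\partial u}{\partial\nu}=0 \text{ on }\partial\Omega,$$ understood in the viscosity sense as follows. For $s\in\mathbb{R}$, $\xi\in\mathbb{R}^n$, $X$ a symmetric $n\times n$ matrix, let $F(s,\xi,X)=\min\{|\xi|-\Lambda|s|,-\langle X\xi,\xi\rangle\}$, $G(s,\xi,X)=\max\{\Lambda|s|-|\xi|,-\langle X\xi,\xi\rangle\}$, $H(X)=-\langle X\xi,\xi\rangle$ (evaluated at the same $\xi$). For a function $u$ and point $x_0$, let $E$ denote $F$ if $u(x_0)>0$, $G$ if $u(x_0)<0$, $H$ if $u(x_0)=0$. An upper semicontinuous $u$ on $\overline\Omega$ is a viscosity subsolution if: for every $x_0\in\Omega$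 and $\phi\in C^2(\Omega)$ with $\phi(x_0)=u(x_0)$ and $u(x)<\phi(x)$ for $x\neq x_0$, one has $E(\phi(x_0),\nabla\phi(x_0),\nabla^2\phi(x_0))\le 0$; and for every $x_0\in\partial\Omega$ and $\phi\in C^2(\overline\Omega)$ with the same touching property, $\min\{E(\phi(x_0),\nabla\phi(x_0),\nabla^2\phi(x_0)),\frac{\partial\phi}{\partial\nu}(x_0)\}\le 0$. A lower semicontinuous $u$ is a viscosity supersolution if the same holds with $u(x)>\phi(x)$ for $x\ne x_0$, with ''$E\le 0$'' replaced by ''$E\ge 0$'' at interior points and with $\max\{E(\phi(x_0),\nabla\phi(x_0),\nabla^2\phi(x_0)),\frac{\partial\phi}{\partial\nu}(x_0)\}\ge 0$ at boundary points. A continuous $u$ is a viscosity solution if it is both a sub- and a supersolution. *)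

(* Defs.v *)
(* classical reals. Points of R^n are represented as
   functions nat -> R vanishing at indices >= n (predicate inRn). *)
From Stdlib Require Import Reals List.
Open Scope R_scope.

Definition pt := nat -> R.

Fixpoint rsum (n : nat) (f : nat -> R) : R :=
  match n with O => 0 | S k => rsum k f + f k end.

Definition dot (n : nat) (x y : pt) : R := rsum n (fun i => x i * y i).
Definition nrm (n : nat) (x : pt) : R := sqrt (dot n x x).
Definition vsub (x y : pt) : pt := fun i => x i - y i.
Definition distn (n : nat) (x y : pt) : R := nrm n (vsub x y).

Definition inRn (n : nat) (x : pt) : Prop := forall i, (n <= i)%nat -> x i = 0.

Definition open_in_Rn (n : nat) (U : pt -> Prop) : Prop :=
  (forall x, U x -> inRn n x) /\
  forall x, U x -> exists r, 0 < r /\ forall y, inRn n y -> distn n y x < r -> U y.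

Definition bounded_in_Rn (n : nat) (U : pt -> Prop) : Prop :=
  exists M, forall x, U x -> nrm n x <= M.

Definition convex_in_Rn (n : nat) (U : pt -> Prop) : Prop :=
  forall x y t, U x -> U y -> 0 <= t <= 1 -> U (fun i => (1 - t) * x i + t * y i).

Definition clos_in_Rn (n : nat) (U : pt -> Prop) (x : pt) : Prop :=
  inRn n x /\ forall eps, 0 < eps -> exists y, U y /\ distn n y x < eps.

Definition bdry_in_Rn (n : nat) (U : pt -> Prop) (x : pt) : Prop :=
  clos_in_Rn n U x /\ ~ U x.

Definition frechet (n : nat) (f : pt -> R) (x : pt) (g : pt) : Prop :=
  forall eps, 0 < eps -> exists delta, 0 < delta /\
    forall y, inRn n y -> distn n y x < delta ->
      Rabs (f y - f x - dot n g (vsub y x)) <= eps * distn n y x.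

Definition cont_at (n : nat) (V : pt -> Prop) (f : pt -> R) (x : pt) : Prop :=
  forall eps, 0 < eps -> exists delta, 0 < delta /\
    forall y, V y -> distn n y x < delta -> Rabs (f y - f x) < eps.

Definition C2_on (n : nat) (U : pt -> Prop) (phi : pt -> R)
    (G : pt -> pt) (H : pt -> nat -> nat -> R) : Prop :=
  forall x, U x ->
    frechet n phi x (G x) /\
    (forall i, (i < n)%nat -> frechet n (fun y => G y i) x (H x i)) /\
    (forall i j, (i < n)%nat -> (j < n)%nat -> cont_at n (inRn n) (fun y => H y i j) x).

(* f is C^infinity on R^n: D l is the iterated partial derivative along the
   multi-index l (D nil = f), each D l Frechet differentiable with partials D (i::l) *)
Definition smooth_fam (n : nat) (f : pt -> R) (D : list nat -> pt -> R) : Prop :=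
  (forall x, D nil x = f x) /\
  forall l x, inRn n x -> frechet n (D l) x (fun i => D (i :: l) x).

(* rho is a smooth global defining function of Om:  Om = {rho < 0},
   grad rho <> 0 on the bdry_in_Rn of Om  (i.e. Om has smooth bdry_in_Rn) *)
Definition defining_fn (n : nat) (Om : pt -> Prop) (rho : pt -> R)
    (D : list nat -> pt -> R) : Prop :=
  smooth_fam n rho D /\
  (forall x, inRn n x -> (Om x <-> rho x < 0)) /\
  (forall x, bdry_in_Rn n Om x -> nrm n (fun i => D (i :: nil) x) <> 0).

Definition outer_normal (n : nat) (D : list nat -> pt -> R) (x : pt) : pt :=
  fun i => D (i :: nil) x / nrm n (fun j => D (j :: nil) x).

Definition qf (n : nat) (X : nat -> nat -> R) (xi : pt) : R :=
  rsum n (fun i => rsum n (fun j => X i j * xi i * xi j)).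

Definition Fop (n : nat) (lam s : R) (xi : pt) (X : nat -> nat -> R) : R :=
  Rmin (nrm n xi - lam * Rabs s) (- qf n X xi).
Definition Gop (n : nat) (lam s : R) (xi : pt) (X : nat -> nat -> R) : R :=
  Rmax (lam * Rabs s - nrm n xi) (- qf n X xi).
Definition Hop (n : nat) (xi : pt) (X : nat -> nat -> R) : R := - qf n X xi.

(* E, selected by the sign of s = u(x0) = phi(x0) *)
Definition Eop (n : nat) (lam s : R) (xi : pt) (X : nat -> nat -> R) : R :=
  if Rlt_dec 0 s then Fop n lam s xi X
  else if Rlt_dec s 0 then Gop n lam s xi X
  else Hop n xi X.

Definition usc_on (n : nat) (V : pt -> Prop) (u : pt -> R) : Prop :=
  forall x, V x -> forall eps, 0 < eps -> exists delta, 0 < delta /\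
    forall y, V y -> distn n y x < delta -> u y < u x + eps.
Definition lsc_on (n : nat) (V : pt -> Prop) (u : pt -> R) : Prop :=
  forall x, V x -> forall eps, 0 < eps -> exists delta, 0 < delta /\
    forall y, V y -> distn n y x < delta -> u x - eps < u y.

Definition visc_sub (n : nat) (Om : pt -> Prop) (lam : R) (nu : pt -> pt) (u : pt -> R) : Prop :=
  usc_on n (clos_in_Rn n Om) u /\
  (forall x0 phi G H, Om x0 -> C2_on n Om phi G H -> phi x0 = u x0 ->
     (forall x, Om x -> x <> x0 -> u x < phi x) ->
     Eop n lam (phi x0) (G x0) (H x0) <= 0) /\
  (forall x0 (V : pt -> Prop) phi G H, bdry_in_Rn n Om x0 ->
     open_in_Rn n V -> (forall x, clos_in_Rn n Om x -> V x) -> C2_on n V phi G H ->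
     phi x0 = u x0 ->
     (forall x, clos_in_Rn n Om x -> x <> x0 -> u x < phi x) ->
     Rmin (Eop n lam (phi x0) (G x0) (H x0)) (dot n (G x0) (nu x0)) <= 0).

Definition visc_super (n : nat) (Om : pt -> Prop) (lam : R) (nu : pt -> pt) (u : pt -> R) : Prop :=
  lsc_on n (clos_in_Rn n Om) u /\
  (forall x0 phi G H, Om x0 -> C2_on n Om phi G H -> phi x0 = u x0 ->
     (forall x, Om x -> x <> x0 -> u x > phi x) ->
     Eop n lam (phi x0) (G x0) (H x0) >= 0) /\
  (forall x0 (V : pt -> Prop) phi G H, bdry_in_Rn n Om x0 ->
     open_in_Rn n V -> (forall x, clos_in_Rn n Om x -> V x) -> C2_on n V phi G H ->
     phi x0 = u x0 ->
     (forall x, clos_in_Rn n Om x -> x <> x0 -> u x > phi x) ->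
     Rmax (Eop n lam (phi x0) (G x0) (H x0)) (dot n (G x0) (nu x0)) >= 0).

Definition visc_solution (n : nat) (Om : pt -> Prop) (lam : R) (nu : pt -> pt) (u : pt -> R) : Prop :=
  (forall x, clos_in_Rn n Om x -> cont_at n (clos_in_Rn n Om) u x) /\
  visc_sub n Om lam nu u /\ visc_super n Om lam nu u.

(* Main.v *)
Require Import Defs.
From Stdlib Require Import Reals List.
From Stdlib Require Import Lra Lia Classical ClassicalEpsilon FunctionalExtensionality.
Open Scope R_scope.


Lemma rsum_ext n f g : (forall i, (i < n)%nat -> f i = g i) -> rsum n f = rsum n g.
Proof. induction n; simpl; intros H; auto. rewrite IHn; [rewrite H; auto|]; intros; apply H; lia. Qed.

Lemma rsum_plus n f g : rsum n (fun i => f i + g i) = rsum n f + rsum n g.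
Proof. induction n; simpl; [ring|rewrite IHn; ring]. Qed.

Lemma rsum_minus n f g : rsum n (fun i => f i - g i) = rsum n f - rsum n g.
Proof. induction n; simpl; [ring|rewrite IHn; ring]. Qed.

Lemma rsum_scal n c f : rsum n (fun i => c * f i) = c * rsum n f.
Proof. induction n; simpl; [ring|rewrite IHn; ring]. Qed.

Lemma rsum_nonneg n f : (forall i, (i < n)%nat -> 0 <= f i) -> 0 <= rsum n f.
Proof. induction n; simpl; intros H; [lra|]. assert (0 <= f n) by (apply H; lia).
 assert (0 <= rsum n f) by (apply IHn; intros; apply H; lia). lra. Qed.

Lemma rsum_le n f g : (forall i, (i < n)%nat -> f i <= g i) -> rsum n f <= rsum n g.
Proof. intros H. assert (0 <= rsum n (fun i => g i - f i)).
 apply rsum_nonneg; intros; specialize (H i H0); lra. rewrite rsum_minus in H0; lra. Qed.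

Lemma rsum_zero n f : (forall i, (i < n)%nat -> f i = 0) -> rsum n f = 0.
Proof. intros H. rewrite (rsum_ext n f (fun i => 0 * 0)). rewrite rsum_scal; ring.
 intros; rewrite H; auto; ring. Qed.

Lemma rsum_elem n f i : (forall j, (j < n)%nat -> 0 <= f j) -> (i < n)%nat -> f i <= rsum n f.
Proof. induction n; intros H Hi; [lia|]. simpl. destruct (Nat.eq_dec i n).
 - subst. assert (0 <= rsum n f) by (apply rsum_nonneg; intros; apply H; lia). lra.
 - assert (f i <= rsum n f) by (apply IHn; [intros; apply H; lia|lia]).
   assert (0 <= f n) by (apply H; lia). lra. Qed.

Lemma rsum_delta n f i : (i < n)%nat -> rsum n (fun j => if Nat.eqb i j then f j else 0) = f i.
Proof. induction n; intros Hi; [lia|]. simpl. destruct (Nat.eqb_spec i n).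
 - subst. rewrite rsum_zero; [ring|]. intros j Hj. destruct (Nat.eqb_spec n j); [lia|auto].
 - rewrite IHn; [ring|lia]. Qed.

Lemma rsum_abs n f : Rabs (rsum n f) <= rsum n (fun i => Rabs (f i)).
Proof. induction n; simpl. rewrite Rabs_R0; lra.
 eapply Rle_trans. apply Rabs_triang. lra. Qed.

Lemma dot_sym n x y : dot n x y = dot n y x.
Proof. unfold dot; apply rsum_ext; intros; ring. Qed.

Lemma dot_self_nonneg n x : 0 <= dot n x x.
Proof. unfold dot; apply rsum_nonneg; intros; apply Rle_0_sqr. Qed.

Lemma nrm_nonneg n x : 0 <= nrm n x.
Proof. unfold nrm; apply sqrt_pos. Qed.

Lemma nrm_sq n x : nrm n x * nrm n x = dot n x x.
Proof. unfold nrm; apply sqrt_sqrt, dot_self_nonneg. Qed.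

Lemma coord_sq_le n x i : (i < n)%nat -> x i * x i <= dot n x x.
Proof. intros; unfold dot. apply (rsum_elem n (fun i => x i * x i)); auto; intros; apply Rle_0_sqr. Qed.

Lemma coord_le_nrm n x i : (i < n)%nat -> Rabs (x i) <= nrm n x.
Proof. intros H. pose proof (coord_sq_le n x i H). pose proof (nrm_sq n x).
 pose proof (nrm_nonneg n x). apply Rsqr_incr_0_var; [|auto]. unfold Rsqr.
 rewrite <- Rabs_mult, Rabs_pos_eq by nra. lra. Qed.

Lemma nrm_zero_coord n x : nrm n x = 0 -> forall i, (i < n)%nat -> x i = 0.
Proof. intros H i Hi. pose proof (coord_le_nrm n x i Hi). rewrite H in H0.
 pose proof (Rabs_pos (x i)).
 destruct (Req_dec (x i) 0); auto. pose proof (Rabs_pos_lt (x i) H2). lra. Qed.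

Lemma dot_half n x y : 2 * dot n x y <= dot n x x + dot n y y.
Proof. unfold dot. rewrite <- rsum_scal, <- rsum_plus. apply rsum_le; intros; cbv beta. pose proof (Rle_0_sqr (x i - y i)); unfold Rsqr in *; nra. Qed.

Lemma dot_scal_l n c x y : dot n (fun i => c * x i) y = c * dot n x y.
Proof. unfold dot; rewrite <- rsum_scal; apply rsum_ext; intros; ring. Qed.
Lemma dot_scal_r n c x y : dot n x (fun i => c * y i) = c * dot n x y.
Proof. unfold dot; rewrite <- rsum_scal; apply rsum_ext; intros; ring. Qed.

Lemma cauchy_schwarz n x y : dot n x y <= nrm n x * nrm n y.
Proof.
 pose proof (nrm_nonneg n x); pose proof (nrm_nonneg n y).
 pose proof (nrm_sq n x); pose proof (nrm_sq n y).
 destruct (Req_dec (nrm n x) 0) as [Hx|Hx].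
 { unfold dot. rewrite rsum_zero. nra. intros; rewrite (nrm_zero_coord n x Hx i H3); ring. }
 destruct (Req_dec (nrm n y) 0) as [Hy|Hy].
 { unfold dot. rewrite rsum_zero. nra. intros; rewrite (nrm_zero_coord n y Hy i H3); ring. }
 pose proof (dot_half n (fun i => / nrm n x * x i) (fun i => / nrm n y * y i)).
 rewrite !dot_scal_l, !dot_scal_r in H3.
 rewrite <- H1, <- H2 in H3.
 assert (Hpx : 0 < nrm n x) by lra. assert (Hpy : 0 < nrm n y) by lra.
 replace (/ nrm n x * (/ nrm n x * (nrm n x * nrm n x))) with 1 in H3 by (field; lra).
 replace (/ nrm n y * (/ nrm n y * (nrm n y * nrm n y))) with 1 in H3 by (field; lra).
 assert (2 * (/ nrm n x * / nrm n y) * dot n x y <= 2) by lra.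
 assert (0 < / nrm n x * / nrm n y) by (apply Rmult_lt_0_compat; apply Rinv_0_lt_compat; auto).
 assert (dot n x y <= nrm n x * nrm n y * ((/ nrm n x * / nrm n y) * dot n x y)).
 { right. field. lra. }
 assert (/ nrm n x * / nrm n y * dot n x y <= 1) by lra.
 assert (nrm n x * nrm n y * ((/ nrm n x * / nrm n y) * dot n x y) <= nrm n x * nrm n y * 1).
 { apply Rmult_le_compat_l; [apply Rmult_le_pos|]; lra. }
 lra. Qed.

Lemma abs_dot_le n x y : Rabs (dot n x y) <= nrm n x * nrm n y.
Proof. unfold Rabs; destruct Rcase_abs. 
 - pose proof (cauchy_schwarz n (fun i => - x i) y).
   assert (dot n (fun i => - x i) y = - dot n x y) by (unfold dot; replace (- rsum n (fun i => x i * y i)) with (-1 * rsum n (fun i => x i * y i)) by ring; rewrite <- (rsum_scal n (-1)); apply rsum_ext; intros; ring).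
   assert (nrm n (fun i => - x i) = nrm n x) by (unfold nrm; f_equal; unfold dot; apply rsum_ext; intros; ring).
   rewrite H0, H1 in H. lra.
 - apply cauchy_schwarz. Qed.

Lemma nrm_triang n x y : nrm n (fun i => x i + y i) <= nrm n x + nrm n y.
Proof. pose proof (nrm_nonneg n x); pose proof (nrm_nonneg n y); pose proof (nrm_nonneg n (fun i => x i + y i)).
 apply Rsqr_incr_0_var; [|lra]. unfold Rsqr. rewrite nrm_sq.
 assert (dot n (fun i => x i + y i) (fun i => x i + y i) = dot n x x + 2 * dot n x y + dot n y y).
 { unfold dot. rewrite <- rsum_scal, <- !rsum_plus. apply rsum_ext; intros; ring. }
 rewrite H2. pose proof (cauchy_schwarz n x y). pose proof (nrm_sq n x); pose proof (nrm_sq n y). nra. Qed.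

Lemma distn_sym n x y : distn n x y = distn n y x.
Proof. unfold distn, nrm, dot, vsub; f_equal; apply rsum_ext; intros; ring. Qed.

Lemma distn_triang n x y z : distn n x z <= distn n x y + distn n y z.
Proof. unfold distn. rewrite (nrm_triang n (vsub x y) (vsub y z)) at 1 || idtac.
 assert (vsub x z = (fun i => vsub x y i + vsub y z i)) by (apply functional_extensionality; intros; unfold vsub; ring).
 rewrite H. apply nrm_triang. Qed.

Lemma distn_nonneg n x y : 0 <= distn n x y.
Proof. apply nrm_nonneg. Qed.

Lemma coord_le_distn n x y i : (i < n)%nat -> Rabs (x i - y i) <= distn n x y.
Proof. intros; apply (coord_le_nrm n (vsub x y) i H). Qed.

Lemma nrm_scal n c x : nrm n (fun i => c * x i) = Rabs c * nrm n x.
Proof. unfold nrm. rewrite dot_scal_l, dot_scal_r, <- Rmult_assoc.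
 rewrite sqrt_mult_alt by nra. f_equal. rewrite <- sqrt_Rsqr_abs. unfold Rsqr; auto. Qed.


Lemma frechet_ext_grad n f x g g' : (forall i, (i < n)%nat -> g i = g' i) ->
  frechet n f x g -> frechet n f x g'.
Proof. intros E H eps He. destruct (H eps He) as [d [Hd Hy]]. exists d; split; auto.
 intros y Hy1 Hy2. replace (dot n g' (vsub y x)) with (dot n g (vsub y x)). auto.
 unfold dot; apply rsum_ext; intros; rewrite E; auto. Qed.

Lemma frechet_ext_fun n f f' x g : (forall y, f y = f' y) -> frechet n f x g -> frechet n f' x g.
Proof. intros E H. replace f' with f; auto. apply functional_extensionality; auto. Qed.

Lemma frechet_lip n f x g : frechet n f x g -> exists d, 0 < d /\ forall y, inRn n y -> distn n y x < d ->
  Rabs (f y - f x) <= (nrm n g + 1) * distn n y x.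
Proof. intros H. destruct (H 1 Rlt_0_1) as [d [Hd Hy]]. exists d; split; auto.
 intros y H1 H2. specialize (Hy y H1 H2). pose proof (abs_dot_le n g (vsub y x)).
 fold (distn n y x) in H0. 
 replace (f y - f x) with ((f y - f x - dot n g (vsub y x)) + dot n g (vsub y x)) by ring.
 eapply Rle_trans. apply Rabs_triang. lra. Qed.

Lemma frechet_cont n f x g : frechet n f x g -> cont_at n (inRn n) f x.
Proof. intros H eps He. destruct (frechet_lip n f x g H) as [d [Hd Hy]].
 pose proof (nrm_nonneg n g).
 exists (Rmin d (eps / (nrm n g + 1))). split. apply Rmin_pos; auto. apply Rdiv_lt_0_compat; lra.
 intros y H1 H2. assert (distn n y x < d) by (eapply Rlt_le_trans; [apply H2|apply Rmin_l]).
 assert (distn n y x < eps / (nrm n g + 1)) by (eapply Rlt_le_trans; [apply H2|apply Rmin_r]).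
 specialize (Hy y H1 H3). eapply Rle_lt_trans. apply Hy.
 apply (Rmult_lt_compat_l (nrm n g + 1)) in H4; [|lra].
 replace ((nrm n g + 1) * (eps / (nrm n g + 1))) with eps in H4 by (field; lra). lra. Qed.

Lemma frechet_const n a x : frechet n (fun _ => a) x (fun _ => 0).
Proof. intros eps He. exists 1; split; [lra|]. intros.
 replace (dot n (fun _ => 0) (vsub y x)) with 0. rewrite Rminus_0_r, Rminus_diag, Rabs_R0.
 apply Rmult_le_pos; [lra|apply distn_nonneg].
 unfold dot; rewrite rsum_zero; auto. intros; ring. Qed.

Lemma frechet_plus n f1 f2 x g1 g2 : frechet n f1 x g1 -> frechet n f2 x g2 ->
  frechet n (fun y => f1 y + f2 y) x (fun i => g1 i + g2 i).
Proof. intros H1 H2 eps He. destruct (H1 (eps/2)) as [d1 [Hd1 Hy1]]; [lra|].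
 destruct (H2 (eps/2)) as [d2 [Hd2 Hy2]]; [lra|]. exists (Rmin d1 d2); split. apply Rmin_pos; auto.
 intros y Hy Hd. assert (distn n y x < d1) by (eapply Rlt_le_trans; [apply Hd|apply Rmin_l]).
 assert (distn n y x < d2) by (eapply Rlt_le_trans; [apply Hd|apply Rmin_r]).
 specialize (Hy1 y Hy H). specialize (Hy2 y Hy H0).
 replace (dot n (fun i => g1 i + g2 i) (vsub y x)) with (dot n g1 (vsub y x) + dot n g2 (vsub y x))
  by (unfold dot; rewrite <- rsum_plus; apply rsum_ext; intros; ring).
 replace (f1 y + f2 y - (f1 x + f2 x) - (dot n g1 (vsub y x) + dot n g2 (vsub y x))) with
  ((f1 y - f1 x - dot n g1 (vsub y x)) + (f2 y - f2 x - dot n g2 (vsub y x))) by ring.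
 eapply Rle_trans. apply Rabs_triang. lra. Qed.

Lemma frechet_scal n c f x g : frechet n f x g -> frechet n (fun y => c * f y) x (fun i => c * g i).
Proof. intros H eps He. destruct (H (eps / (Rabs c + 1))) as [d [Hd Hy]].
 apply Rdiv_lt_0_compat; [lra|pose proof (Rabs_pos c); lra].
 exists d; split; auto. intros y H1 H2. specialize (Hy y H1 H2).
 rewrite dot_scal_l. replace (c * f y - c * f x - c * dot n g (vsub y x)) with (c * (f y - f x - dot n g (vsub y x))) by ring.
 rewrite Rabs_mult. pose proof (Rabs_pos c). pose proof (distn_nonneg n y x).
 apply Rle_trans with (Rabs c * (eps / (Rabs c + 1) * distn n y x)). apply Rmult_le_compat_l; auto.
 replace (Rabs c * (eps / (Rabs c + 1) * distn n y x)) with ((Rabs c / (Rabs c + 1)) * (eps * distn n y x)) by (field; lra).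
 assert (Rabs c / (Rabs c + 1) <= 1). { apply Rmult_le_reg_r with (Rabs c + 1); [lra|]. unfold Rdiv; rewrite Rmult_assoc, Rinv_l; lra. }
 assert (0 <= eps * distn n y x) by (apply Rmult_le_pos; lra).
 nra. Qed.

Lemma frechet_coord n i x : (i < n)%nat -> frechet n (fun y => y i) x (fun j => if Nat.eqb i j then 1 else 0).
Proof. intros Hi eps He. exists 1; split; [lra|]. intros.
 replace (dot n (fun j => if Nat.eqb i j then 1 else 0) (vsub y x)) with (y i - x i).
 replace (y i - x i - (y i - x i)) with 0 by ring. rewrite Rabs_R0. apply Rmult_le_pos; [lra|apply distn_nonneg].
 unfold dot. rewrite <- (rsum_delta n (fun j => vsub y x j) i Hi) at 1.
 apply rsum_ext; intros. destruct (Nat.eqb i i0); unfold vsub; ring. Qed.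

Lemma deriv_bound f t l : derivable_pt_lim f t l -> forall eps, 0 < eps -> exists d, 0 < d /\
  forall h, Rabs h < d -> Rabs (f (t + h) - f t - l * h) <= eps * Rabs h.
Proof. intros H eps He. destruct (H eps He) as [d Hd]. exists d; split. apply cond_pos.
 intros h Hh. destruct (Req_dec h 0). subst. rewrite Rplus_0_r. replace (f t - f t - l * 0) with 0 by ring.
 rewrite Rabs_R0; lra.
 specialize (Hd h H0 Hh). 
 replace (f (t + h) - f t - l * h) with (((f (t + h) - f t) / h - l) * h) by (field; auto).
 rewrite Rabs_mult. apply Rmult_le_compat_r. apply Rabs_pos. lra. Qed.

Lemma frechet_comp n (Phi : R -> R) l f x g : frechet n f x g -> derivable_pt_lim Phi (f x) l ->
  frechet n (fun y => Phi (f y)) x (fun i => l * g i).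
Proof. intros Hf HP eps He.
 set (C := nrm n g + 1). assert (HC : 1 <= C) by (pose proof (nrm_nonneg n g); unfold C; lra).
 destruct (deriv_bound Phi (f x) l HP (eps / (2 * C))) as [d0 [Hd0 H0]]. apply Rdiv_lt_0_compat; lra.
 set (e2 := Rmin 1 (eps / (2 * (Rabs l + 1)))).
 assert (He2 : 0 < e2). { apply Rmin_pos; [lra|]. apply Rdiv_lt_0_compat; [lra|]. pose proof (Rabs_pos l); lra. }
 destruct (Hf e2 He2) as [d1 [Hd1 H1]].
 exists (Rmin d1 (d0 / C)). split. apply Rmin_pos; auto. apply Rdiv_lt_0_compat; lra.
 intros y Hy Hd. assert (distn n y x < d1) by (eapply Rlt_le_trans; [apply Hd|apply Rmin_l]).
 assert (distn n y x < d0 / C) by (eapply Rlt_le_trans; [apply Hd|apply Rmin_r]).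
 specialize (H1 y Hy H). pose proof (abs_dot_le n g (vsub y x)). fold (distn n y x) in H3.
 pose proof (distn_nonneg n y x).
 assert (He21 : e2 <= 1) by apply Rmin_l.
 assert (He22 : e2 <= eps / (2 * (Rabs l + 1))) by apply Rmin_r.
 set (h := f y - f x).
 assert (Hh : Rabs h <= C * distn n y x).
 { unfold h, C. replace (f y - f x) with ((f y - f x - dot n g (vsub y x)) + dot n g (vsub y x)) by ring.
   eapply Rle_trans. apply Rabs_triang. assert (e2 * distn n y x <= 1 * distn n y x) by (apply Rmult_le_compat_r; lra). lra. }
 assert (Rabs h < d0). { apply Rle_lt_trans with (C * distn n y x); auto.
   apply (Rmult_lt_compat_l C) in H2; [|lra]. replace (C * (d0 / C)) with d0 in H2 by (field; lra). lra. }
 specialize (H0 h H5). replace (f x + h) with (f y) in H0 by (unfold h; ring).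
 replace (dot n (fun i => l * g i) (vsub y x)) with (l * dot n g (vsub y x)) by (rewrite dot_scal_l; auto).
 replace (Phi (f y) - Phi (f x) - l * dot n g (vsub y x)) with
   ((Phi (f y) - Phi (f x) - l * h) + l * (f y - f x - dot n g (vsub y x))) by (unfold h; ring).
 eapply Rle_trans. apply Rabs_triang. rewrite Rabs_mult.
 assert (A1 : eps / (2 * C) * Rabs h <= eps / 2 * distn n y x).
 { apply Rle_trans with (eps / (2 * C) * (C * distn n y x)). apply Rmult_le_compat_l; auto.
   apply Rlt_le, Rdiv_lt_0_compat; lra. right; field; lra. }
 assert (A2 : Rabs l * Rabs (f y - f x - dot n g (vsub y x)) <= eps / 2 * distn n y x).
 { apply Rle_trans with (Rabs l * (e2 * distn n y x)). apply Rmult_le_compat_l; auto. apply Rabs_pos.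
   apply Rle_trans with (Rabs l * (eps / (2 * (Rabs l + 1)) * distn n y x)).
   apply Rmult_le_compat_l. apply Rabs_pos. apply Rmult_le_compat_r; auto.
   replace (Rabs l * (eps / (2 * (Rabs l + 1)) * distn n y x)) with ((Rabs l / (Rabs l + 1)) * (eps / 2 * distn n y x)) by (field; pose proof (Rabs_pos l); lra).
   assert (Rabs l / (Rabs l + 1) <= 1). { pose proof (Rabs_pos l). apply Rmult_le_reg_r with (Rabs l + 1); [lra|]. unfold Rdiv; rewrite Rmult_assoc, Rinv_l; lra. }
   assert (0 <= eps / 2 * distn n y x) by (apply Rmult_le_pos; lra).
   pose proof (Rabs_pos l). assert (0 <= Rabs l / (Rabs l + 1)) by (unfold Rdiv; apply Rmult_le_pos; [lra|apply Rlt_le, Rinv_0_lt_compat; lra]).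
   apply Rle_trans with (1 * (eps / 2 * distn n y x)). apply Rmult_le_compat_r; auto. lra. }
 lra. Qed.


Lemma frechet_mult n f l x g1 g2 : frechet n f x g1 -> frechet n l x g2 ->
  frechet n (fun y => f y * l y) x (fun i => f x * g2 i + l x * g1 i).
Proof. intros Hf Hl eps He.
 destruct (frechet_lip n f x g1 Hf) as [da [Hda Ha]].
 destruct (frechet_lip n l x g2 Hl) as [db [Hdb Hb]].
 set (C1 := nrm n g1 + 1). set (C2 := nrm n g2 + 1).
 assert (HC1 : 1 <= C1) by (pose proof (nrm_nonneg n g1); unfold C1; lra).
 assert (HC2 : 1 <= C2) by (pose proof (nrm_nonneg n g2); unfold C2; lra).
 set (A := Rabs (f x) + 1). set (B := Rabs (l x) + 1).
 assert (HA : 1 <= A) by (pose proof (Rabs_pos (f x)); unfold A; lra).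
 assert (HB : 1 <= B) by (pose proof (Rabs_pos (l x)); unfold B; lra).
 destruct (Hf (eps / (3 * B))) as [d1 [Hd1 H1]]. apply Rdiv_lt_0_compat; lra.
 destruct (Hl (eps / (3 * A))) as [d2 [Hd2 H2]]. apply Rdiv_lt_0_compat; lra.
 set (d3 := eps / (3 * (C1 * C2))).
 assert (Hd3 : 0 < d3) by (apply Rdiv_lt_0_compat; [lra|]; apply Rmult_lt_0_compat; [lra|]; apply Rmult_lt_0_compat; lra).
 exists (Rmin (Rmin da db) (Rmin (Rmin d1 d2) d3)). split.
 repeat apply Rmin_pos; auto.
 intros y Hy Hd. 
 assert (distn n y x < da) by (eapply Rlt_le_trans; [apply Hd|]; eapply Rle_trans; [apply Rmin_l|apply Rmin_l]).
 assert (distn n y x < db) by (eapply Rlt_le_trans; [apply Hd|]; eapply Rle_trans; [apply Rmin_l|apply Rmin_r]).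
 assert (distn n y x < d1) by (eapply Rlt_le_trans; [apply Hd|]; eapply Rle_trans; [apply Rmin_r|]; eapply Rle_trans; [apply Rmin_l|apply Rmin_l]).
 assert (distn n y x < d2) by (eapply Rlt_le_trans; [apply Hd|]; eapply Rle_trans; [apply Rmin_r|]; eapply Rle_trans; [apply Rmin_l|apply Rmin_r]).
 assert (distn n y x < d3) by (eapply Rlt_le_trans; [apply Hd|]; eapply Rle_trans; [apply Rmin_r|apply Rmin_r]).
 specialize (Ha y Hy H). specialize (Hb y Hy H0). specialize (H1 y Hy H3). specialize (H2 y Hy H4).
 pose proof (distn_nonneg n y x) as Hdn. set (r := distn n y x) in *.
 replace (dot n (fun i => f x * g2 i + l x * g1 i) (vsub y x)) with (f x * dot n g2 (vsub y x) + l x * dot n g1 (vsub y x))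
  by (unfold dot; rewrite <- !rsum_scal, <- rsum_plus; apply rsum_ext; intros; ring).
 replace (f y * l y - f x * l x - (f x * dot n g2 (vsub y x) + l x * dot n g1 (vsub y x))) with
   (f x * (l y - l x - dot n g2 (vsub y x)) + l x * (f y - f x - dot n g1 (vsub y x)) + (f y - f x) * (l y - l x)) by ring.
 eapply Rle_trans. apply Rabs_triang. eapply Rle_trans. apply Rplus_le_compat_r. apply Rabs_triang.
 rewrite !Rabs_mult.
 assert (T1 : Rabs (f x) * Rabs (l y - l x - dot n g2 (vsub y x)) <= eps / 3 * r).
 { apply Rle_trans with (A * (eps / (3 * A) * r)). apply Rmult_le_compat; try apply Rabs_pos; auto. unfold A; lra.
   right; field; lra. }
 assert (T2 : Rabs (l x) * Rabs (f y - f x - dot n g1 (vsub y x)) <= eps / 3 * r).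
 { apply Rle_trans with (B * (eps / (3 * B) * r)). apply Rmult_le_compat; try apply Rabs_pos; auto. unfold B; lra.
   right; field; lra. }
 assert (T3 : Rabs (f y - f x) * Rabs (l y - l x) <= eps / 3 * r).
 { apply Rle_trans with ((C1 * r) * (C2 * r)). apply Rmult_le_compat; try apply Rabs_pos; auto.
   replace (C1 * r * (C2 * r)) with ((C1 * C2 * r) * r) by ring. apply Rmult_le_compat_r; auto.
   apply Rle_trans with (C1 * C2 * d3). apply Rmult_le_compat_l; [apply Rmult_le_pos; lra|lra].
   unfold d3. right; field; split; lra. }
 lra. Qed.

Definition qd (n : nat) (c y : pt) : R := dot n (vsub y c) (vsub y c).

Lemma qd_nonneg n c y : 0 <= qd n c y.
Proof. apply dot_self_nonneg. Qed.

Lemma frechet_qd n c x : frechet n (qd n c) x (fun i => 2 * (x i - c i)).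
Proof. intros eps He. exists eps; split; auto. intros y Hy Hd.
 replace (qd n c y - qd n c x - dot n (fun i => 2 * (x i - c i)) (vsub y x)) with (distn n y x * distn n y x).
 rewrite Rabs_pos_eq. apply Rmult_le_compat_r. apply distn_nonneg. lra. apply Rmult_le_pos; apply distn_nonneg.
 unfold distn. rewrite nrm_sq. unfold qd, dot. rewrite <- !rsum_minus. apply rsum_ext; intros; unfold vsub; ring. Qed.

Definition rad (Phi : R -> R) n c : pt -> R := fun y => Phi (qd n c y).
Definition radG (P1 : R -> R) n c : pt -> pt := fun y i => P1 (qd n c y) * (2 * (y i - c i)).
Definition radH (P1 P2 : R -> R) n c : pt -> nat -> nat -> R := fun y i j =>
  P2 (qd n c y) * (2 * (y j - c j)) * (2 * (y i - c i)) + P1 (qd n c y) * (if Nat.eqb i j then 2 else 0).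

Definition phi_ok (Phi P1 P2 : R -> R) := forall t, 0 <= t ->
  derivable_pt_lim Phi t (P1 t) /\ derivable_pt_lim P1 t (P2 t) /\ exists l, derivable_pt_lim P2 t l.

Lemma fdiff_lin n i c x : (i < n)%nat -> frechet n (fun y => 2 * (y i - c i)) x (fun j => 2 * ((if Nat.eqb i j then 1 else 0) + 0)).
Proof. intros Hi. apply frechet_scal. apply frechet_plus. apply frechet_coord; auto.
 apply frechet_ext_grad with (fun _ => 0). intros; auto. 
 apply (frechet_const n (- c i) x). Qed.

Lemma rad_C2 Phi P1 P2 n c U : phi_ok Phi P1 P2 -> C2_on n U (rad Phi n c) (radG P1 n c) (radH P1 P2 n c).
Proof. intros Hok x Ux. destruct (Hok (qd n c x) (qd_nonneg n c x)) as [D0 [D1 [l3 D2]]].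
 split; [|split].
 - unfold rad, radG. apply frechet_comp; auto. apply frechet_qd.
 - intros i Hi. unfold radG. eapply frechet_ext_grad; [|apply frechet_mult].
   2: apply frechet_comp; [apply frechet_qd|apply D1]. 2: apply fdiff_lin; auto.
   intros j Hj. unfold radH. cbv beta. destruct (Nat.eqb i j); ring.
 - intros i j Hi Hj. unfold radH.
   assert (exists g, frechet n (fun y => P2 (qd n c y) * (2 * (y j - c j)) * (2 * (y i - c i)) +
      P1 (qd n c y) * (if Nat.eqb i j then 2 else 0)) x g) as [g Hg].
   { eexists. apply frechet_plus.
     + apply frechet_mult; [apply frechet_mult|].
       apply frechet_comp; [apply frechet_qd|apply D2]. all: apply fdiff_lin; auto.
     + apply frechet_mult. apply frechet_comp; [apply frechet_qd|apply D1]. apply frechet_const. }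
   exact (frechet_cont n _ x g Hg).
Qed.


Lemma nat_gt r N : exists k, (N <= k)%nat /\ r < INR k.
Proof. destruct (INR_unbounded r) as [m Hm]. exists (Nat.max N m). split. lia.
 apply Rlt_le_trans with (INR m); [lra|apply le_INR; lia]. Qed.

Lemma nat_small e N : 0 < e -> exists k, (N <= k)%nat /\ / (INR k + 1) < e.
Proof. intros He. destruct (nat_gt (/ e) N) as [k [Hk1 Hk2]]. exists k; split; auto.
 pose proof (pos_INR k). rewrite <- (Rinv_inv e). apply Rinv_lt_contravar.
 apply Rmult_lt_0_compat. apply Rinv_0_lt_compat; auto. lra. lra. Qed.

Lemma incr_ge (f : nat -> nat) : (forall k, (f k < f (S k))%nat) -> forall k, (k <= f k)%nat.
Proof. intros H; induction k; [lia|]. specialize (H k); lia. Qed.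

Lemma incr_mono (f : nat -> nat) : (forall k, (f k < f (S k))%nat) -> forall a b, (a <= b)%nat -> (f a <= f b)%nat.
Proof. intros H a b Hab. induction Hab; auto. specialize (H m); lia. Qed.

Lemma sub1d (a : nat -> R) B : (forall k, Rabs (a k) <= B) ->
  exists phi : nat -> nat, (forall k, (phi k < phi (S k))%nat) /\ exists l, Un_cv (fun k => a (phi k)) l.
Proof. intros Hb.
 destruct (Bolzano_Weierstrass a (fun c => -B <= c <= B)) as [l Hl].
 apply compact_P3. intros k; specialize (Hb k); unfold Rabs in Hb; destruct Rcase_abs; lra.
 assert (Hc : forall k N, exists p, (N <= p)%nat /\ Rabs (a p - l) < / (INR k + 1)).
 { intros k N. assert (Hp : 0 < / (INR k + 1)) by (apply Rinv_0_lt_compat; pose proof (pos_INR k); lra).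
   destruct (Hl (disc l (mkposreal _ Hp)) N) as [p [Hp1 Hp2]].
   exists (mkposreal _ Hp). intros y Hy; auto. exists p; split; auto. }
 set (ch := fun k N => proj1_sig (constructive_indefinite_description _ (Hc k N))).
 assert (Hch : forall k N, (N <= ch k N)%nat /\ Rabs (a (ch k N) - l) < / (INR k + 1)).
 { intros. unfold ch. destruct (constructive_indefinite_description _ (Hc k N)); auto. }
 set (phi := fix phi k := match k with O => ch O O | S k' => ch (S k') (S (phi k')) end).
 exists phi. split.
 - intros k. simpl. destruct (Hch (S k) (S (phi k))). lia.
 - exists l. intros eps He. destruct (nat_small eps 0 He) as [N [_ HN]]. exists N. intros k Hk.
   unfold R_dist. assert (Rabs (a (phi k) - l) < / (INR k + 1)).
   { destruct k; simpl; [apply Hch|apply Hch]. }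
   eapply Rlt_trans. apply H. eapply Rle_lt_trans; [|apply HN].
   apply Rinv_le_contravar. pose proof (pos_INR N); lra. apply Rplus_le_compat_r, le_INR; lia. Qed.

Lemma Un_cv_sub (a : nat -> R) l (psi : nat -> nat) : (forall k, (psi k < psi (S k))%nat) ->
  Un_cv a l -> Un_cv (fun k => a (psi k)) l.
Proof. intros Hp H eps He. destruct (H eps He) as [N HN]. exists N. intros k Hk. apply HN.
 pose proof (incr_ge psi Hp k). lia. Qed.

Lemma subseq_n (xs : nat -> pt) B : (forall k i, Rabs (xs k i) <= B) -> forall j,
  exists phi : nat -> nat, (forall k, (phi k < phi (S k))%nat) /\
  exists L : nat -> R, forall i, (i < j)%nat -> Un_cv (fun k => xs (phi k) i) (L i).
Proof. intros Hb j. induction j.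
 - exists (fun k => k). split. intros; lia. exists (fun _ => 0). intros; lia.
 - destruct IHj as [phi [Hphi [L HL]]].
   destruct (sub1d (fun k => xs (phi k) j) B) as [psi [Hpsi [l Hl]]]. intros; apply Hb.
   exists (fun k => phi (psi k)). split.
   + intros k. apply Nat.lt_le_trans with (phi (S (psi k))). apply Hphi. apply incr_mono; auto. apply Hpsi.
   + exists (fun i => if Nat.eqb i j then l else L i). intros i Hi. destruct (Nat.eqb_spec i j).
     * subst. auto.
     * apply (Un_cv_sub (fun k => xs (phi k) i)); auto. apply HL; lia. Qed.

Lemma rsum_const n c : rsum n (fun _ => c) = INR n * c.
Proof. induction n; simpl rsum. simpl; ring. rewrite IHn, S_INR; ring. Qed.

Lemma unif_N (a : nat -> pt) (L : nat -> R) j : (forall i, (i < j)%nat -> Un_cv (fun k => a k i) (L i)) ->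
  forall e, 0 < e -> exists N, forall k, (N <= k)%nat -> forall i, (i < j)%nat -> Rabs (a k i - L i) < e.
Proof. induction j; intros H e He.
 - exists O; intros; lia.
 - destruct (IHj (fun i Hi => H i ltac:(lia)) e He) as [N1 HN1].
   destruct (H j ltac:(lia) e He) as [N2 HN2]. exists (Nat.max N1 N2). intros k Hk i Hi.
   destruct (Nat.eq_dec i j). subst. apply HN2; lia. apply HN1; lia. Qed.

Lemma small_coords_nrm n v e : 0 < e -> (forall i, (i < n)%nat -> Rabs (v i) < e / (INR n + 1)) -> nrm n v < e.
Proof. intros He H. unfold nrm. pose proof (pos_INR n). set (e' := e / (INR n + 1)).
 assert (He' : 0 < e') by (apply Rdiv_lt_0_compat; lra).
 assert (dot n v v <= INR n * (e' * e')).
 { unfold dot. rewrite <- rsum_const. apply rsum_le. intros i Hi. cbv beta. specialize (H i Hi).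
   assert (E : v i * v i = Rabs (v i) * Rabs (v i)) by (rewrite <- Rabs_mult; rewrite Rabs_pos_eq; [ring|apply Rle_0_sqr]).
   rewrite E. pose proof (Rabs_pos (v i)). unfold e'. apply Rmult_le_compat; lra. }
 assert (INR n * (e' * e') < e * e).
 { unfold e'. replace (INR n * (e / (INR n + 1) * (e / (INR n + 1)))) with ((e * e) * (INR n / ((INR n + 1) * (INR n + 1)))) by (field; lra).
   assert (Hq : 0 < (INR n + 1) * (INR n + 1)) by (apply Rmult_lt_0_compat; lra).
   assert (INR n / ((INR n + 1) * (INR n + 1)) < 1).
   { apply Rmult_lt_reg_r with ((INR n + 1) * (INR n + 1)). lra. unfold Rdiv. rewrite Rmult_assoc, Rinv_l by lra. 
     assert (INR n * 1 < (INR n + 1) * 1) by lra. assert ((INR n + 1) * 1 <= (INR n + 1) * (INR n + 1)) by (apply Rmult_le_compat_l; lra). lra. }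
   assert (0 < e * e) by (apply Rmult_lt_0_compat; lra).
   assert (e * e * (INR n / ((INR n + 1) * (INR n + 1))) < e * e * 1) by (apply Rmult_lt_compat_l; lra). lra. }
 rewrite <- (sqrt_Rsqr e) by lra. apply sqrt_lt_1_alt. split. apply dot_self_nonneg. unfold Rsqr; lra. Qed.


Lemma K_inRn n Om x : clos_in_Rn n Om x -> inRn n x.
Proof. intros [H _]; auto. Qed.

Lemma nrm_le_dist n x y : nrm n x <= distn n x y + nrm n y.
Proof. unfold distn. replace x with (fun i => vsub x y i + y i) at 1. apply nrm_triang.
 apply functional_extensionality; intros; unfold vsub; ring. Qed.

Lemma K_bounded n Om B : (forall x, Om x -> nrm n x <= B) -> forall x, clos_in_Rn n Om x -> forall i, Rabs (x i) <= B + 1.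
Proof. intros HB x [Hx Hc] i. destruct (Nat.lt_ge_cases i n).
 - destruct (Hc 1 Rlt_0_1) as [y [Hy Hd]]. pose proof (coord_le_nrm n x i H).
   pose proof (nrm_le_dist n x y). rewrite distn_sym in Hd. specialize (HB y Hy). lra.
 - rewrite (Hx i H). rewrite Rabs_R0. pose proof (HB); 
   destruct (Hc 1 Rlt_0_1) as [y [Hy Hd]]. specialize (HB y Hy). pose proof (nrm_nonneg n y). lra. Qed.

Lemma seq_compact n Om B (xs : nat -> pt) : (forall x, Om x -> nrm n x <= B) -> (forall k, clos_in_Rn n Om (xs k)) ->
  exists phi : nat -> nat, exists x, clos_in_Rn n Om x /\ (forall k, (k <= phi k)%nat) /\
   forall e, 0 < e -> exists N, forall k, (N <= k)%nat -> distn n (xs (phi k)) x < e.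
Proof. intros HB Hxs.
 destruct (subseq_n xs (B + 1)) with n as [phi [Hphi [L HL]]].
 { intros k i. apply (K_bounded n Om B HB); auto. }
 set (x := fun i => if Nat.ltb i n then L i else 0).
 assert (Hconv : forall e, 0 < e -> exists N, forall k, (N <= k)%nat -> distn n (xs (phi k)) x < e).
 { intros e He. pose proof (pos_INR n).
   destruct (unif_N (fun k => xs (phi k)) L n HL (e / (INR n + 1))) as [N HN]. apply Rdiv_lt_0_compat; lra.
   exists N. intros k Hk. apply small_coords_nrm; auto. intros i Hi. unfold vsub, x.
   destruct (Nat.ltb_spec i n); [|lia]. apply HN; auto. }
 exists phi, x. split; [|split].
 - split. intros i Hi. unfold x. destruct (Nat.ltb_spec i n); auto; lia.
   intros e He. destruct (Hconv (e/2)) as [N HN]. lra.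
   destruct (Hxs (phi N)) as [_ Hc]. destruct (Hc (e/2)) as [y [Hy Hd]]. lra.
   exists y. split; auto. pose proof (distn_triang n y (xs (phi N)) x). specialize (HN N (le_n N)). lra.
 - apply incr_ge; auto.
 - auto. Qed.

Lemma EVT_min n Om B (f : pt -> R) : (forall x, Om x -> nrm n x <= B) -> (exists x, clos_in_Rn n Om x) ->
  (forall x, clos_in_Rn n Om x -> cont_at n (clos_in_Rn n Om) f x) -> exists x0, clos_in_Rn n Om x0 /\ forall x, clos_in_Rn n Om x -> f x0 <= f x.
Proof. intros HB [z Hz] Hf.
 assert (Hlb : exists m, forall x, clos_in_Rn n Om x -> m <= f x).
 { apply NNPP. intros Hn.
   assert (Hs : forall k : nat, exists x, clos_in_Rn n Om x /\ f x < - INR k).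
   { intros k. apply NNPP. intros Hk. apply Hn. exists (- INR k). intros x Kx.
     apply Rnot_lt_le. intros Hlt. apply Hk. exists x; auto. }
   destruct (choice _ Hs) as [xs Hxs].
   destruct (seq_compact n Om B xs HB (fun k => proj1 (Hxs k))) as [phi [x [Kx [Hphi Hc]]]].
   destruct (Hf x Kx 1 Rlt_0_1) as [d [Hd Hcd]]. destruct (Hc d Hd) as [N HN].
   destruct (nat_gt (- f x + 1) N) as [k [Hk1 Hk2]].
   specialize (Hcd (xs (phi k)) (proj1 (Hxs (phi k))) (HN k Hk1)).
   destruct (Hxs (phi k)) as [_ Hlt]. pose proof (le_INR _ _ (Hphi k)).
   unfold Rabs in Hcd; destruct Rcase_abs in Hcd; lra. }
 destruct Hlb as [m Hm].
 destruct (completeness (fun r => exists x, clos_in_Rn n Om x /\ r = - f x)) as [s [Hs1 Hs2]].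
 { exists (- m). intros r [x [Kx ->]]. specialize (Hm x Kx). lra. }
 { exists (- f z); exists z; auto. }
 assert (Hge : forall x, clos_in_Rn n Om x -> - s <= f x). { intros x Kx. assert (- f x <= s) by (apply Hs1; exists x; auto). lra. }
 assert (Happ : forall e, 0 < e -> exists x, clos_in_Rn n Om x /\ f x < - s + e).
 { intros e He. apply NNPP. intros Hn. assert (s <= s - e). apply Hs2. intros r [x [Kx ->]].
   apply Rnot_lt_le. intros Hlt. apply Hn. exists x; split; auto. lra. lra. }
 assert (Hs : forall k : nat, exists x, clos_in_Rn n Om x /\ f x < - s + / (INR k + 1)).
 { intros k. apply Happ. apply Rinv_0_lt_compat; pose proof (pos_INR k); lra. }
 destruct (choice _ Hs) as [xs Hxs].
 destruct (seq_compact n Om B xs HB (fun k => proj1 (Hxs k))) as [phi [x [Kx [Hphi Hc]]]].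
 exists x; split; auto. intros y Ky. apply Rle_trans with (- s); auto.
 apply Rnot_lt_le; intros Hlt. set (e := f x - - s).
 destruct (Hf x Kx (e/2)) as [d [Hd Hcd]]. unfold e; lra.
 destruct (Hc d Hd) as [N1 HN1].
 destruct (nat_small (e/2) N1) as [k [Hk1 Hk2]]. unfold e; lra.
 specialize (Hcd (xs (phi k)) (proj1 (Hxs (phi k))) (HN1 k Hk1)).
 destruct (Hxs (phi k)) as [_ Hlt2].
 assert (/ (INR (phi k) + 1) <= / (INR k + 1)).
 { apply Rinv_le_contravar. pose proof (pos_INR k); lra. apply Rplus_le_compat_r, le_INR, Hphi. }
 unfold Rabs in Hcd; destruct Rcase_abs in Hcd; unfold e in *; lra. Qed.


Lemma distn_self n x : distn n x x = 0.
Proof. unfold distn, nrm, dot. rewrite rsum_zero. apply sqrt_0. intros; unfold vsub; ring. Qed.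

Lemma Om_K n Om x : open_in_Rn n Om -> Om x -> clos_in_Rn n Om x.
Proof. intros [H1 _] Hx. split. auto. intros e He. exists x; split; auto. rewrite distn_self; auto. Qed.

Lemma K_diam n Om diam : is_lub (fun r => exists x y, Om x /\ Om y /\ r = distn n x y) diam ->
  forall x y, clos_in_Rn n Om x -> clos_in_Rn n Om y -> distn n x y <= diam.
Proof. intros [Hub _] x y [_ Hx] [_ Hy]. apply Rnot_lt_le; intros Hlt. set (e := (distn n x y - diam) / 3).
 assert (He : 0 < e) by (unfold e; lra).
 destruct (Hx e He) as [x' [Hx' Hdx]]. destruct (Hy e He) as [y' [Hy' Hdy]].
 assert (distn n x' y' <= diam) by (apply Hub; exists x', y'; auto).
 pose proof (distn_triang n x x' y). pose proof (distn_triang n x' y' y).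
 rewrite distn_sym in Hdx. unfold e in *; lra. Qed.

Lemma conv_bdry n Om x0 z r1 t : (forall x, Om x -> inRn n x) -> convex_in_Rn n Om -> clos_in_Rn n Om x0 -> Om z -> inRn n z -> 0 < r1 ->
  (forall y, inRn n y -> distn n y z < r1 -> Om y) -> 0 < t <= 1 ->
  Om (fun i => (1 - t) * x0 i + t * z i).
Proof. intros HOm Hconv [Hx0 Hc] Hz Hzn Hr1 Hball Ht.
 destruct (Hc (t * r1)) as [x' [Hx' Hd]]. apply Rmult_lt_0_compat; lra.
 assert (Hx'n : inRn n x') by auto.
 set (z2 := fun i => z i + (1 - t) / t * (x0 i - x' i)).
 assert (Hz2 : Om z2).
 { apply Hball. intros i Hi. unfold z2. rewrite Hzn, Hx0, Hx'n by auto. ring.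
   unfold distn. replace (vsub z2 z) with (fun i => (1 - t) / t * vsub x0 x' i)
     by (apply functional_extensionality; intros; unfold z2, vsub; ring).
   rewrite nrm_scal. fold (distn n x0 x'). rewrite distn_sym.
   rewrite Rabs_pos_eq. 2: { unfold Rdiv; apply Rmult_le_pos; [lra|apply Rlt_le, Rinv_0_lt_compat; lra]. }
   apply Rle_lt_trans with ((1 - t) / t * (t * r1)). apply Rmult_le_compat_l; [unfold Rdiv; apply Rmult_le_pos; [lra|apply Rlt_le, Rinv_0_lt_compat; lra]|lra].
   replace ((1 - t) / t * (t * r1)) with ((1 - t) * r1) by (field; lra). nra. }
 replace (fun i => (1 - t) * x0 i + t * z i) with (fun i => (1 - t) * x' i + t * z2 i).
 apply Hconv; auto; lra.
 apply functional_extensionality; intros i; unfold z2. field. lra. Qed.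

Lemma normal_pos n Om rho D x0 c : open_in_Rn n Om -> convex_in_Rn n Om -> defining_fn n Om rho D ->
  bdry_in_Rn n Om x0 -> Om c -> 0 < dot n (vsub x0 c) (fun i => D (i :: nil) x0).
Proof. intros [HOm Hopen] Hconv [[HD0 HD1] [Hrho Hgr]] [Hx0K Hx0n] Hc.
 pose proof (proj1 Hx0K) as Hx0.
 set (gr := fun i => D (i :: nil) x0). set (N := nrm n gr).
 assert (HN : 0 < N). { pose proof (nrm_nonneg n gr). specialize (Hgr x0 (conj Hx0K Hx0n)). fold gr N in Hgr.
   destruct H; auto. fold N in H. congruence. }
 destruct (Hopen c Hc) as [r0 [Hr0 Hb0]].
 set (e := fun i => if Nat.ltb i n then gr i / N else 0).
 assert (Hge : dot n gr e = N).
 { unfold dot, e. transitivity (rsum n (fun i => / N * (gr i * gr i))).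
   apply rsum_ext; intros i Hi; destruct (Nat.ltb_spec i n); [|lia]. field; lra.
   rewrite rsum_scal. fold (dot n gr gr). rewrite <- (nrm_sq n gr). fold N. field; lra. }
 assert (Hee : nrm n e = 1).
 { unfold nrm. replace (dot n e e) with 1. apply sqrt_1.
   unfold dot, e. transitivity (rsum n (fun i => / (N * N) * (gr i * gr i))).
   2: { apply rsum_ext; intros i Hi; destruct (Nat.ltb_spec i n); [|lia]. field; lra. }
   rewrite rsum_scal. fold (dot n gr gr). rewrite <- (nrm_sq n gr). fold N. field; lra. }
 set (z := fun i => c i + r0 / 2 * e i).
 assert (Hzn : inRn n z). { intros i Hi. unfold z, e. rewrite (HOm c Hc i Hi). destruct (Nat.ltb_spec i n); [lia|ring]. }
 assert (Hz : Om z).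
 { apply Hb0; auto. unfold distn. replace (vsub z c) with (fun i => r0 / 2 * e i)
    by (apply functional_extensionality; intros; unfold vsub, z; ring).
   rewrite nrm_scal, Hee, Rabs_pos_eq; lra. }
 destruct (Hopen z Hz) as [r1 [Hr1 Hb1]].
 set (w := vsub z x0).
 assert (Hw : dot n gr w <= 0).
 { apply Rnot_lt_le; intros Ha. set (a := dot n gr w) in *.
   pose proof (nrm_nonneg n w).
   destruct (HD1 nil x0 Hx0 (a / (2 * (nrm n w + 1)))) as [d [Hd Hfr]].
   apply Rdiv_lt_0_compat; lra.
   set (t := Rmin 1 (d / (2 * (nrm n w + 1)))).
   assert (Ht0 : 0 < t) by (apply Rmin_pos; [lra|apply Rdiv_lt_0_compat; lra]).
   assert (Ht1 : t <= 1) by apply Rmin_l.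
   assert (Ht2 : t <= d / (2 * (nrm n w + 1))) by apply Rmin_r.
   set (p := fun i => (1 - t) * x0 i + t * z i).
   assert (Hp : Om p) by (apply (conv_bdry n Om x0 z r1 t); auto).
   assert (Hvp : vsub p x0 = fun i => t * w i) by (apply functional_extensionality; intros; unfold vsub, p, w, vsub; ring).
   assert (Hdp : distn n p x0 = t * nrm n w) by (unfold distn; rewrite Hvp, nrm_scal, Rabs_pos_eq; lra).
   assert (Hdp2 : distn n p x0 < d).
   { rewrite Hdp. apply Rle_lt_trans with (d / (2 * (nrm n w + 1)) * nrm n w). apply Rmult_le_compat_r; auto.
     apply Rmult_lt_reg_r with (2 * (nrm n w + 1)). lra.
     replace (d / (2 * (nrm n w + 1)) * nrm n w * (2 * (nrm n w + 1))) with (d * nrm n w) by (field; lra). nra. }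
   specialize (Hfr p (HOm p Hp) Hdp2). fold gr in Hfr. rewrite Hvp, dot_scal_r, Hdp in Hfr. fold a in Hfr.
   rewrite !HD0 in Hfr. assert (rho p < 0) by (apply Hrho; auto).
   assert (0 <= rho x0) by (apply Rnot_lt_le; intros Hl; apply Hx0n; apply Hrho; auto).
   assert (Hb : a / (2 * (nrm n w + 1)) * (t * nrm n w) <= t * a / 2).
   { replace (a / (2 * (nrm n w + 1)) * (t * nrm n w)) with ((t * a / 2) * (nrm n w / (nrm n w + 1))) by (field; lra).
     assert (nrm n w / (nrm n w + 1) <= 1). { apply Rmult_le_reg_r with (nrm n w + 1); [lra|]. unfold Rdiv; rewrite Rmult_assoc, Rinv_l; lra. }
     assert (0 <= nrm n w / (nrm n w + 1)) by (unfold Rdiv; apply Rmult_le_pos; [lra|apply Rlt_le, Rinv_0_lt_compat; lra]).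
     assert (0 < t * a / 2) by (apply Rmult_lt_0_compat; [apply Rmult_lt_0_compat|]; lra). nra. }
   assert (0 < t * a) by (apply Rmult_lt_0_compat; lra).
   unfold Rabs in Hfr; destruct Rcase_abs in Hfr; lra. }
 assert (Hsplit : dot n gr w = - dot n (vsub x0 c) gr + r0 / 2 * N).
 { rewrite <- Hge. unfold w, dot, z, vsub. rewrite <- rsum_scal. replace (- rsum n (fun i => (x0 i - c i) * gr i)) with (-1 * rsum n (fun i => (x0 i - c i) * gr i)) by ring.
   rewrite <- rsum_scal, <- rsum_plus. apply rsum_ext; intros; ring. }
 assert (0 < r0 / 2 * N) by (apply Rmult_lt_0_compat; lra). fold gr. lra. Qed.


Lemma qf_rad n (y : pt) P Q :
  qf n (fun i j => Q * (2 * y j) * (2 * y i) + P * (if Nat.eqb i j then 2 else 0)) (fun i => P * (2 * y i))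
  = 4 * (P * P) * dot n y y * (4 * Q * dot n y y + 2 * P).
Proof. unfold qf.
 transitivity (rsum n (fun i => (16 * Q * (P * P) * dot n y y + 8 * (P * P * P)) * (y i * y i))).
 - apply rsum_ext; intros i Hi.
   transitivity (rsum n (fun j => (16 * Q * (P * P) * (y i * y i)) * (y j * y j) +
       (if Nat.eqb i j then 8 * (P * P * P) * y i * y j else 0))).
   + apply rsum_ext; intros j Hj. destruct (Nat.eqb i j); ring.
   + rewrite rsum_plus, rsum_scal. rewrite (rsum_delta n (fun j => 8 * (P * P * P) * y i * y j) i Hi).
     fold (dot n y y). ring.
 - rewrite rsum_scal. fold (dot n y y). ring. Qed.

Lemma nrm_rad n (y : pt) P : nrm n (fun i => P * (2 * y i)) = Rabs (2 * P) * nrm n y.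
Proof. rewrite <- nrm_scal. unfold nrm, dot; f_equal; apply rsum_ext; intros; ring. Qed.

Lemma Eop_neg n lam s G H : 0 < qf n H G -> (s < 0 -> lam * Rabs s < nrm n G) -> Eop n lam s G H < 0.
Proof. intros Hq Hs. unfold Eop. destruct (Rlt_dec 0 s).
 - unfold Fop. apply Rle_lt_trans with (- qf n H G). apply Rmin_r. lra.
 - destruct (Rlt_dec s 0).
   + unfold Gop. apply Rmax_lub_lt. specialize (Hs r); lra. lra.
   + unfold Hop; lra. Qed.

Lemma Eop_neg_opp n lam s G H : Eop n lam (- s) (fun i => - G i) (fun i j => - H i j) = - Eop n lam s G H.
Proof.
 assert (Hn : nrm n (fun i => - G i) = nrm n G) by (unfold nrm, dot; f_equal; apply rsum_ext; intros; ring).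
 assert (Hq : qf n (fun i j => - H i j) (fun i => - G i) = - qf n H G).
 { unfold qf. replace (- rsum n (fun i => rsum n (fun j => H i j * G i * G j))) with
     (-1 * rsum n (fun i => rsum n (fun j => H i j * G i * G j))) by ring. rewrite <- rsum_scal.
   apply rsum_ext; intros. replace (-1 * rsum n (fun j => H i j * G i * G j)) with (rsum n (fun j => -1 * (H i j * G i * G j))) by (rewrite rsum_scal; ring).
   apply rsum_ext; intros; ring. }
 unfold Eop, Fop, Gop, Hop. rewrite Hn, Hq, Rabs_Ropp.
 destruct (Rlt_dec 0 s); destruct (Rlt_dec 0 (- s)); destruct (Rlt_dec s 0); destruct (Rlt_dec (- s) 0); try lra;
 rewrite ?Ropp_involutive; unfold Rmin, Rmax; repeat destruct (Rle_dec _ _); lra. Qed.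

Lemma qd_zero_eq n x y : inRn n x -> inRn n y -> qd n x y = 0 -> y = x.
Proof. intros Hx Hy Hq. apply functional_extensionality; intros i.
 destruct (Nat.lt_ge_cases i n).
 - assert (nrm n (vsub y x) = 0) by (unfold nrm; fold (qd n x y); rewrite Hq; apply sqrt_0).
   pose proof (nrm_zero_coord n _ H0 i H). unfold vsub in H1; lra.
 - rewrite Hx, Hy; auto. Qed.

Lemma qd_self n x : qd n x x = 0.
Proof. unfold qd, dot. apply rsum_zero; intros; unfold vsub; ring. Qed.

Lemma C2_plus n U f1 f2 G1 G2 H1 H2 : C2_on n U f1 G1 H1 -> C2_on n U f2 G2 H2 ->
  C2_on n U (fun y => f1 y + f2 y) (fun y i => G1 y i + G2 y i) (fun y i j => H1 y i j + H2 y i j).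
Proof. intros A B x Ux. destruct (A x Ux) as [A1 [A2 A3]]. destruct (B x Ux) as [B1 [B2 B3]].
 split; [|split].
 - apply frechet_plus; auto.
 - intros i Hi. apply (frechet_plus n (fun y => G1 y i) (fun y => G2 y i)); auto.
 - intros i j Hi Hj eps He. destruct (A3 i j Hi Hj (eps/2)) as [d1 [Hd1 D1]]. lra.
   destruct (B3 i j Hi Hj (eps/2)) as [d2 [Hd2 D2]]. lra.
   exists (Rmin d1 d2). split. apply Rmin_pos; auto. intros y Hy Hd.
   assert (distn n y x < d1) by (eapply Rlt_le_trans; [apply Hd|apply Rmin_l]).
   assert (distn n y x < d2) by (eapply Rlt_le_trans; [apply Hd|apply Rmin_r]).
   specialize (D1 y Hy H). specialize (D2 y Hy H0).
   replace (H1 y i j + H2 y i j - (H1 x i j + H2 x i j)) with ((H1 y i j - H1 x i j) + (H2 y i j - H2 x i j)) by ring.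
   eapply Rle_lt_trans. apply Rabs_triang. lra. Qed.

Lemma C2_opp n U f G H : C2_on n U f G H -> C2_on n U (fun y => - f y) (fun y i => - G y i) (fun y i j => - H y i j).
Proof. intros A x Ux. destruct (A x Ux) as [A1 [A2 A3]]. split; [|split].
 - eapply frechet_ext_grad; [|eapply frechet_ext_fun; [|apply (frechet_scal n (-1) f x _ A1)]].
   intros; simpl; ring. intros; simpl; ring.
 - intros i Hi. eapply frechet_ext_grad; [|eapply frechet_ext_fun; [|apply (frechet_scal n (-1) (fun y => G y i) x _ (A2 i Hi))]].
   intros; simpl; ring. intros; simpl; ring.
 - intros i j Hi Hj eps He. destruct (A3 i j Hi Hj eps He) as [d [Hd D]]. exists d; split; auto.
   intros y Hy Hdy. specialize (D y Hy Hdy). replace (- H y i j - - H x i j) with (- (H y i j - H x i j)) by ring.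
   rewrite Rabs_Ropp; auto. Qed.


Lemma cont_sub n V f g x : cont_at n V f x -> cont_at n V g x -> cont_at n V (fun y => f y - g y) x.
Proof. intros A B eps He. destruct (A (eps/2)) as [d1 [Hd1 D1]]. lra. destruct (B (eps/2)) as [d2 [Hd2 D2]]. lra.
 exists (Rmin d1 d2). split. apply Rmin_pos; auto. intros y Hy Hd.
 assert (distn n y x < d1) by (eapply Rlt_le_trans; [apply Hd|apply Rmin_l]).
 assert (distn n y x < d2) by (eapply Rlt_le_trans; [apply Hd|apply Rmin_r]).
 specialize (D1 y Hy H). specialize (D2 y Hy H0).
 replace (f y - g y - (f x - g x)) with ((f y - f x) - (g y - g x)) by ring.
 eapply Rle_lt_trans. apply Rabs_triang. rewrite Rabs_Ropp. lra. Qed.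

Lemma cont_mono n V W f x : (forall y, V y -> W y) -> cont_at n W f x -> cont_at n V f x.
Proof. intros HVW A eps He. destruct (A eps He) as [d [Hd D]]. exists d; split; auto. Qed.

Lemma dpl_eq f t l l' : derivable_pt_lim f t l -> l = l' -> derivable_pt_lim f t l'.
Proof. intros; subst; auto. Qed.

Lemma phi_ok_shift Phi P1 P2 mu : phi_ok Phi P1 P2 -> phi_ok (fun t => Phi t + mu) P1 P2.
Proof. intros H t Ht. destruct (H t Ht) as [A [B C]]. split; auto.
 apply dpl_eq with (P1 t + 0). apply (derivable_pt_lim_plus Phi (fun _ => mu)); auto.
 apply derivable_pt_lim_const. ring. Qed.

Lemma phi_ok_sq : phi_ok (fun t => - (t * t)) (fun t => -2 * t) (fun _ => -2).
Proof. intros t Ht. split; [|split].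
 - apply dpl_eq with (- (1 * t + t * 1)). apply (derivable_pt_lim_opp (fun t => t * t)).
   apply (derivable_pt_lim_mult id id). apply derivable_pt_lim_id. apply derivable_pt_lim_id. ring.
 - apply dpl_eq with (-2 * 1). apply (derivable_pt_lim_scal id). apply derivable_pt_lim_id. ring.
 - exists 0. apply derivable_pt_lim_const. Qed.

Definition super_int n Om lam (u : pt -> R) := forall x0 phi G H, Om x0 -> C2_on n Om phi G H -> phi x0 = u x0 ->
     (forall x, Om x -> x <> x0 -> u x > phi x) ->
     Eop n lam (phi x0) (G x0) (H x0) >= 0.
Definition super_bdry n Om lam nu (u : pt -> R) := forall x0 (V : pt -> Prop) phi G H, bdry_in_Rn n Om x0 ->
     open_in_Rn n V -> (forall x, clos_in_Rn n Om x -> V x) -> C2_on n V phi G H ->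
     phi x0 = u x0 ->
     (forall x, clos_in_Rn n Om x -> x <> x0 -> u x > phi x) ->
     Rmax (Eop n lam (phi x0) (G x0) (H x0)) (dot n (G x0) (nu x0)) >= 0.

Lemma core n Om rho D lam u B c Phi P1 P2 r0 :
 open_in_Rn n Om -> convex_in_Rn n Om -> defining_fn n Om rho D ->
 (forall x, Om x -> nrm n x <= B) ->
 (forall x, clos_in_Rn n Om x -> cont_at n (clos_in_Rn n Om) u x) ->
 super_int n Om lam u -> super_bdry n Om lam (outer_normal n D) u ->
 Om c -> phi_ok Phi P1 P2 -> 0 < r0 ->
 (forall x, clos_in_Rn n Om x -> qd n c x < r0 -> Phi (qd n c x) < u x) ->
 (forall x, clos_in_Rn n Om x -> r0 <= qd n c x -> P1 (qd n c x) < 0 /\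
    0 < 2 * P1 (qd n c x) + 4 * qd n c x * P2 (qd n c x) /\
    (u x < 0 -> lam * (- u x) < -2 * P1 (qd n c x) * sqrt (qd n c x))) ->
 forall x, clos_in_Rn n Om x -> Phi (qd n c x) <= u x.
Proof. intros Hopen Hconv Hdef HB Hcont Hsi Hsb Hc Hok Hr0 Hnear Hfar x Kx.
 apply Rnot_lt_le; intros Hlt.
 set (K := clos_in_Rn n Om) in *.
 set (f := fun y => u y - Phi (qd n c y)).
 destruct (EVT_min n Om B f HB (ex_intro _ x Kx)) as [x0 [Kx0 Hmin]].
 { intros y Ky. apply cont_sub. apply Hcont; auto.
   destruct (Hok (qd n c y) (qd_nonneg n c y)) as [Dp _].
   apply cont_mono with (inRn n). intros z [Hz _]; auto.
   eapply frechet_cont. apply (frechet_comp n Phi _ (qd n c) y _ (frechet_qd n c y) Dp). }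
 set (mu := f x0). assert (Hmu : mu < 0) by (specialize (Hmin x Kx); unfold mu, f in *; lra).
 set (S0 := qd n c x0).
 assert (HS0 : r0 <= S0). { apply Rnot_lt_le; intros Hs. specialize (Hnear x0 Kx0 Hs). unfold mu, f, S0 in *; lra. }
 destruct (Hfar x0 Kx0 HS0) as [HP [HQ Hneg]]. fold S0 in HP, HQ, Hneg.
 set (psi := fun y => rad (fun t => Phi t + mu) n c y + rad (fun t => - (t * t)) n x0 y).
 set (G := fun y i => radG P1 n c y i + radG (fun t => -2 * t) n x0 y i).
 set (H := fun y i j => radH P1 P2 n c y i j + radH (fun t => -2 * t) (fun _ => -2) n x0 y i j).
 assert (HC2 : forall U, C2_on n U psi G H).
 { intros U. apply C2_plus; apply rad_C2. apply phi_ok_shift; auto. apply phi_ok_sq. }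
 assert (Hx0n : inRn n x0) by (destruct Kx0; auto).
 assert (Hpsi0 : psi x0 = u x0). { unfold psi, rad. rewrite qd_self. fold S0. unfold mu, f. fold S0. ring. }
 assert (HG0 : G x0 = fun i => P1 S0 * (2 * vsub x0 c i)).
 { apply functional_extensionality; intros i. unfold G, radG. fold S0. unfold vsub; ring. }
 assert (HH0 : H x0 = fun i j => P2 S0 * (2 * vsub x0 c j) * (2 * vsub x0 c i) + P1 S0 * (if Nat.eqb i j then 2 else 0)).
 { apply functional_extensionality; intros i. apply functional_extensionality; intros j.
   unfold H, radH. fold S0. rewrite qd_self. unfold vsub. destruct (Nat.eqb i j); ring. }
 assert (HS0pos : 0 < S0) by lra.
 assert (Hqf : 0 < qf n (H x0) (G x0)).
 { rewrite HH0, HG0, qf_rad. fold (qd n c x0). fold S0.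
   assert (0 < P1 S0 * P1 S0) by (apply Rmult_lt_0_compat_neg || nra). 
   assert (0 < 4 * (P1 S0 * P1 S0) * S0) by (apply Rmult_lt_0_compat; lra).
   apply Rmult_lt_0_compat; lra. }
 assert (Hnrm : nrm n (G x0) = -2 * P1 S0 * sqrt S0).
 { rewrite HG0, nrm_rad. rewrite Rabs_left by lra. unfold nrm. fold (qd n c x0). fold S0. ring. }
 assert (HE : Eop n lam (psi x0) (G x0) (H x0) < 0).
 { apply Eop_neg; auto. rewrite Hpsi0, Hnrm. intros Hs. rewrite Rabs_left by lra. apply Hneg; auto. }
 assert (Hstrict : forall y, K y -> y <> x0 -> u y > psi y).
 { intros y Ky Hne. specialize (Hmin y Ky). unfold psi, rad.
   assert (0 < qd n x0 y). { destruct (qd_nonneg n x0 y) as [Hq|Hq]; auto. exfalso; apply Hne. apply (qd_zero_eq n); auto.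
     destruct Ky; auto. }
   assert (0 < qd n x0 y * qd n x0 y) by (apply Rmult_lt_0_compat; lra).
   unfold mu, f in *. lra. }
 destruct (classic (Om x0)) as [HOm|HnOm].
 - specialize (Hsi x0 psi G H HOm (HC2 Om) Hpsi0). 
   assert (Eop n lam (psi x0) (G x0) (H x0) >= 0). { apply Hsi. intros y Hy Hne. apply Hstrict; auto. apply Om_K; auto. }
   lra.
 - assert (Hbd : bdry_in_Rn n Om x0) by (split; auto).
   assert (Hop : open_in_Rn n (inRn n)). { split; auto. intros y Hy. exists 1; split; [lra|auto]. }
   specialize (Hsb x0 (inRn n) psi G H Hbd Hop (fun y Ky => proj1 Ky) (HC2 _) Hpsi0 Hstrict).
   assert (Hdot : dot n (G x0) (outer_normal n D x0) < 0).
   { rewrite HG0. unfold outer_normal.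
     pose proof (normal_pos n Om rho D x0 c Hopen Hconv Hdef Hbd Hc) as Hnp.
     destruct Hdef as [Hd1 [Hd2 Hd3]]. specialize (Hd3 x0 Hbd).
     set (Nr := nrm n (fun j => D (j :: nil) x0)) in *.
     assert (HNr : 0 < Nr). { pose proof (nrm_nonneg n (fun j => D (j :: nil) x0)). fold Nr in H0. destruct H0; auto. congruence. }
     replace (dot n (fun i => P1 S0 * (2 * vsub x0 c i)) (fun i => D (i :: nil) x0 / Nr)) with
       ((2 * P1 S0 / Nr) * dot n (vsub x0 c) (fun i => D (i :: nil) x0)).
     2: { unfold dot. rewrite <- rsum_scal. apply rsum_ext; intros; field; lra. }
     assert (2 * P1 S0 / Nr < 0). { unfold Rdiv. assert (0 < / Nr) by (apply Rinv_0_lt_compat; auto). nra. }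
     nra. }
   assert (Rmax (Eop n lam (psi x0) (G x0) (H x0)) (dot n (G x0) (outer_normal n D x0)) < 0) by (apply Rmax_lub_lt; auto).
   lra. Qed.

From Coquelicot Require Coquelicot.

Module DerivM.
Import Coquelicot.Coquelicot.
Lemma phi_ok_cone a k e h : 0 < h ->
  phi_ok (fun t => a - k * sqrt (t + h) + e * t) (fun t => - k / (2 * sqrt (t + h)) + e)
         (fun t => k / (4 * (t + h) * sqrt (t + h))).
Proof. intros Hh t Ht. assert (Hs : 0 < sqrt (t + h)) by (apply sqrt_lt_R0; lra).
 pose proof (sqrt_sqrt (t + h) ltac:(lra)) as Hss.
 split; [|split].
 - apply is_derive_Reals. auto_derive. lra. field. lra.
 - apply is_derive_Reals. auto_derive. split. lra. split. apply Rgt_not_eq. apply Rmult_lt_0_compat; lra. auto.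
   set (s := sqrt (t + h)) in *. rewrite <- Hss. field. lra.
 - eexists. apply is_derive_Reals. auto_derive. repeat split; try lra; apply Rgt_not_eq; repeat apply Rmult_lt_0_compat; lra.
   reflexivity. Qed.
End DerivM.

Lemma sqrt_lt_sq x r : 0 <= x -> 0 < r -> x < r * r -> sqrt x < r.
Proof. intros. rewrite <- (sqrt_square r) by lra. apply sqrt_lt_1_alt; lra. Qed.
Lemma sqrt_ge_sq x r : 0 < r -> r * r <= x -> r <= sqrt x.
Proof. intros. rewrite <- (sqrt_square r) by lra. apply sqrt_le_1_alt; lra. Qed.

Lemma bound_main n Om rho D lam w B diam x1 x2 :
 open_in_Rn n Om -> convex_in_Rn n Om -> defining_fn n Om rho D ->
 (forall x, Om x -> nrm n x <= B) ->
 (forall x y, clos_in_Rn n Om x -> clos_in_Rn n Om y -> distn n x y <= diam) ->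
 (forall x, clos_in_Rn n Om x -> cont_at n (clos_in_Rn n Om) w x) ->
 super_int n Om lam w -> super_bdry n Om lam (outer_normal n D) w -> 0 < lam ->
 clos_in_Rn n Om x1 -> clos_in_Rn n Om x2 ->
 (forall x, clos_in_Rn n Om x -> w x <= w x1) -> (forall x, clos_in_Rn n Om x -> w x2 <= w x) ->
 forall k, lam * Rmax 0 (- w x2) < k -> w x1 - w x2 <= k * diam.
Proof. intros Hopen Hconv Hdef HB Hdiam Hcont Hsi Hsb Hlam K1 K2 Hmax Hmin k Hk.
 set (K := clos_in_Rn n Om) in *. set (M := w x1) in *. set (mm := w x2) in *.
 set (A := Rmax 0 (- mm)) in *.
 assert (HA0 : 0 <= A) by apply Rmax_l. assert (HA1 : - mm <= A) by apply Rmax_r.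
 assert (Hk0 : 0 < k) by (assert (0 <= lam * A) by (apply Rmult_le_pos; lra); lra).
 apply Rnot_lt_le; intros Hcon. set (delta := M - mm - k * diam) in *.
 assert (Hdel : 0 < delta) by (unfold delta; lra).
 destruct (Hcont x1 K1 (delta / 3)) as [rho1 [Hrho1 Hc1]]. lra.
 destruct (proj2 K1 (Rmin (rho1 / 2) (delta / (3 * k)))) as [c [Hc Hdc]].
 { apply Rmin_pos. lra. apply Rdiv_lt_0_compat; lra. }
 assert (Hdc1 : distn n c x1 < rho1 / 2) by (eapply Rlt_le_trans; [apply Hdc|apply Rmin_l]).
 assert (Hdc2 : distn n c x1 < delta / (3 * k)) by (eapply Rlt_le_trans; [apply Hdc|apply Rmin_r]).
 assert (Kc : K c) by (apply Om_K; auto).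
 set (rr := rho1 / 2). assert (Hrr : 0 < rr) by (unfold rr; lra).
 set (Dm := diam). assert (HDm : 0 <= Dm). { pose proof (Hdiam c c Kc Kc). rewrite distn_self in H. auto. }
 set (rr3 := rr * rr * rr). assert (Hrr3 : 0 < rr3) by (unfold rr3; repeat apply Rmult_lt_0_compat; lra).
 set (den := k / (rr * rr) + 2 * k * Dm / rr3).
 assert (Hden : 0 < den). { unfold den. assert (0 < k / (rr * rr)) by (apply Rdiv_lt_0_compat; [lra|apply Rmult_lt_0_compat; lra]).
   assert (0 <= 2 * k * Dm / rr3) by (unfold Rdiv; apply Rmult_le_pos; [apply Rmult_le_pos; lra|apply Rlt_le, Rinv_0_lt_compat; lra]). lra. }
 set (T := (k - lam * A) / den). assert (HT : 0 < T) by (apply Rdiv_lt_0_compat; lra).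
 set (eta := Rmin (Rmin 1 rr) (Rmin (delta / (6 * k)) (Rmin (rr3 / (4 * (Dm + 1))) (T / 2)))).
 assert (Heta : 0 < eta). { unfold eta. repeat apply Rmin_pos; try lra; apply Rdiv_lt_0_compat; lra. }
 assert (He1 : eta <= 1) by (unfold eta; eapply Rle_trans; [apply Rmin_l|apply Rmin_l]).
 assert (He2 : eta <= rr) by (unfold eta; eapply Rle_trans; [apply Rmin_l|apply Rmin_r]).
 assert (He3 : eta <= delta / (6 * k)) by (unfold eta; eapply Rle_trans; [apply Rmin_r|apply Rmin_l]).
 assert (He4 : eta <= rr3 / (4 * (Dm + 1))) by (unfold eta; eapply Rle_trans; [apply Rmin_r|]; eapply Rle_trans; [apply Rmin_r|apply Rmin_l]).
 assert (He5 : eta <= T / 2) by (unfold eta; eapply Rle_trans; [apply Rmin_r|]; eapply Rle_trans; [apply Rmin_r|apply Rmin_r]).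
 set (h := eta * eta). assert (Hh : 0 < h) by (unfold h; apply Rmult_lt_0_compat; lra).
 assert (Hhe : h <= eta) by (unfold h; assert (eta * eta <= eta * 1) by (apply Rmult_le_compat_l; lra); lra).
 set (eps := k * h / rr3). assert (Heps : 0 < eps) by (unfold eps; apply Rdiv_lt_0_compat; [apply Rmult_lt_0_compat|]; lra).
 set (a := M - delta / 3).
 pose proof (core n Om rho D lam w B c _ _ _ (rr * rr) Hopen Hconv Hdef HB Hcont Hsi Hsb Hc
   (DerivM.phi_ok_cone a k eps h Hh)) as Hcore.
 assert (Hfin : forall x, K x -> (fun t => a - k * sqrt (t + h) + eps * t) (qd n c x) <= w x).
 { apply Hcore. apply Rmult_lt_0_compat; lra.
   -
     intros x Kx Hq. cbv beta. set (s := qd n c x) in *. pose proof (qd_nonneg n c x) as Hs0. fold s in Hs0.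
     assert (Hdx : distn n x c < rr) by (apply sqrt_lt_sq; auto).
     assert (Hdx1 : distn n x x1 < rho1) by (pose proof (distn_triang n x c x1); unfold rr in *; lra).
     specialize (Hc1 x Kx Hdx1). fold M in Hc1.
     assert (Hwx : a < w x) by (unfold a; unfold Rabs in Hc1; destruct Rcase_abs in Hc1; lra).
     assert (eta <= sqrt (s + h)) by (apply sqrt_ge_sq; unfold h; lra).
     assert (eps * s <= k * eta).
     { apply Rle_trans with (eps * (rr * rr)). apply Rmult_le_compat_l; lra.
       unfold eps, rr3, h. replace (k * (eta * eta) / (rr * rr * rr) * (rr * rr)) with (k * eta * (eta / rr)) by (field; lra).
       assert (eta / rr <= 1) by (apply Rmult_le_reg_r with rr; [lra|]; unfold Rdiv; rewrite Rmult_assoc, Rinv_l; lra).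
       assert (0 <= k * eta) by (apply Rmult_le_pos; lra).
       assert (k * eta * (eta / rr) <= k * eta * 1) by (apply Rmult_le_compat_l; lra). lra. }
     assert (k * eta <= k * sqrt (s + h)) by (apply Rmult_le_compat_l; lra).
     lra.
   -
     intros x Kx Hq. set (s := qd n c x) in *. pose proof (qd_nonneg n c x) as Hs0. fold s in Hs0.
     set (r := sqrt s). assert (Hr : rr <= r) by (apply sqrt_ge_sq; auto).
     assert (HrD : r <= Dm) by (apply (Hdiam x c Kx Kc)).
     assert (Hrs : r * r = s) by (apply sqrt_sqrt; auto).
     set (W := sqrt (s + h)). assert (HWW : W * W = s + h) by (apply sqrt_sqrt; lra).
     assert (HWr : r <= W) by (apply sqrt_le_1_alt; lra).
     assert (HW0 : 0 < W) by lra.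
     assert (HWe : W <= r + eta). { apply Rsqr_incr_0_var; [|lra]. unfold Rsqr. rewrite HWW. unfold h. nra. }
     split; [|split].
     + assert (eps <= k / (4 * (Dm + 1))).
       { unfold eps. apply Rle_trans with (k * eta / rr3). unfold Rdiv. apply Rmult_le_compat_r. apply Rlt_le, Rinv_0_lt_compat; lra.
         apply Rmult_le_compat_l; lra.
         apply Rle_trans with (k * (rr3 / (4 * (Dm + 1))) / rr3). unfold Rdiv. apply Rmult_le_compat_r. apply Rlt_le, Rinv_0_lt_compat; lra.
         apply Rmult_le_compat_l; lra. right; field; lra. }
       assert (k / (2 * (Dm + 1)) <= k / (2 * W)).
       { apply Rmult_le_compat_l; [lra|]. apply Rinv_le_contravar; lra. }
       assert (k / (4 * (Dm + 1)) < k / (2 * (Dm + 1))).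
       { apply Rmult_lt_compat_l; [lra|]. apply Rinv_lt_contravar. apply Rmult_lt_0_compat; lra. lra. }
       fold W. lra.
     + fold W. replace (2 * (- k / (2 * W) + eps) + 4 * s * (k / (4 * (s + h) * W))) with (2 * eps - k * h / (W * W * W))
         by (rewrite <- HWW; replace s with (W * W - h) at 1 by lra; field; lra).
       assert (k * h / (W * W * W) <= k * h / rr3).
       { unfold Rdiv. apply Rmult_le_compat_l. apply Rmult_le_pos; lra. apply Rinv_le_contravar. lra.
         unfold rr3. assert (rr * rr <= W * W) by (apply Rmult_le_compat; lra). assert (0 <= rr * rr) by (apply Rmult_le_pos; lra). apply Rmult_le_compat; lra. }
       unfold eps in *. lra.
     + intros Hw. fold W.
       assert (Hwx : - w x <= A) by (specialize (Hmin x Kx); fold mm in Hmin; lra).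
       assert (lam * (- w x) <= lam * A) by (apply Rmult_le_compat_l; lra).
       replace (-2 * (- k / (2 * W) + eps) * r) with (k * (r / W) - 2 * eps * r) by (field; lra).
       assert (Hrw : 1 - h / (rr * rr) <= r / W).
       { assert (r / W <= 1) by (apply Rmult_le_reg_r with W; [lra|]; unfold Rdiv; rewrite Rmult_assoc, Rinv_l; lra).
         assert (r / W * (r / W) <= r / W) by (assert (0 <= r / W) by (unfold Rdiv; apply Rmult_le_pos; [lra|apply Rlt_le, Rinv_0_lt_compat; lra]); nra).
         assert (r / W * (r / W) = 1 - h / (W * W)) by (replace (r / W * (r / W)) with ((r * r) / (W * W)) by (field; lra); rewrite Hrs, HWW; field; lra).
         assert (h / (W * W) <= h / (rr * rr)).
         { unfold Rdiv. apply Rmult_le_compat_l; [lra|]. apply Rinv_le_contravar. apply Rmult_lt_0_compat; lra. apply Rmult_le_compat; lra. }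
         lra. }
       assert (2 * eps * r <= 2 * eps * Dm) by (apply Rmult_le_compat_l; lra).
       assert (k * (1 - h / (rr * rr)) <= k * (r / W)) by (apply Rmult_le_compat_l; lra).
       assert (Hhd : h * den < k - lam * A).
       { apply Rle_lt_trans with (T / 2 * den). apply Rmult_le_compat_r; lra.
         unfold T. replace ((k - lam * A) / den / 2 * den) with ((k - lam * A) / 2) by (field; lra). lra. }
       unfold den in Hhd. unfold eps.
       replace (h * (k / (rr * rr) + 2 * k * Dm / rr3)) with (k * (h / (rr * rr)) + 2 * (k * h / rr3) * Dm) in Hhd by (field; lra).
       unfold eps in H0. rewrite Rmult_minus_distr_l, Rmult_1_r in H1. lra. }
 specialize (Hfin x2 K2). cbv beta in Hfin. fold mm in Hfin.
 set (s2 := qd n c x2) in *. pose proof (qd_nonneg n c x2) as Hs2. fold s2 in Hs2.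
 assert (Hr2 : sqrt s2 <= Dm + delta / (3 * k)).
 { change (sqrt s2) with (distn n x2 c). pose proof (distn_triang n x2 x1 c). pose proof (Hdiam x2 x1 K2 K1).
   rewrite (distn_sym n x1 c) in H. fold Dm in H0. lra. }
 assert (HW2 : sqrt (s2 + h) <= sqrt s2 + eta).
 { pose proof (sqrt_pos s2). apply Rsqr_incr_0_var; [|lra]. unfold Rsqr. rewrite sqrt_sqrt by lra.
   replace ((sqrt s2 + eta) * (sqrt s2 + eta)) with (sqrt s2 * sqrt s2 + 2 * sqrt s2 * eta + eta * eta) by ring.
   rewrite sqrt_sqrt by lra. unfold h. nra. }
 assert (0 <= eps * s2) by (apply Rmult_le_pos; lra).
 assert (k * sqrt (s2 + h) <= k * (Dm + delta / (3 * k) + eta)) by (apply Rmult_le_compat_l; lra).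
 assert (k * eta <= delta / 6). { apply Rle_trans with (k * (delta / (6 * k))). apply Rmult_le_compat_l; lra. right; field; lra. }
 replace (k * (Dm + delta / (3 * k) + eta)) with (k * Dm + delta / 3 + k * eta) in H0 by (field; lra).
 unfold a, delta, Dm in *. lra. Qed.


Lemma cont_opp n V f x : cont_at n V f x -> cont_at n V (fun y => - f y) x.
Proof. intros A eps He. destruct (A eps He) as [d [Hd D]]. exists d; split; auto.
 intros y Hy Hdy. specialize (D y Hy Hdy). replace (- f y - - f x) with (- (f y - f x)) by ring.
 rewrite Rabs_Ropp; auto. Qed.

Lemma sub_to_super_int n Om lam nu u : visc_sub n Om lam nu u -> super_int n Om lam (fun y => - u y).
Proof. intros [_ [Hi _]] x0 phi G H Hx0 HC Heq Hlt.
 specialize (Hi x0 (fun y => - phi y) (fun y i => - G y i) (fun y i j => - H y i j) Hx0 (C2_opp n Om phi G H HC)).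
 assert (Eop n lam (- phi x0) (fun i => - G x0 i) (fun i j => - H x0 i j) <= 0).
 { apply Hi. rewrite Heq; ring. intros x Hx Hne. specialize (Hlt x Hx Hne). lra. }
 rewrite Eop_neg_opp in H0. lra. Qed.

Lemma sub_to_super_bdry n Om lam nu u : visc_sub n Om lam nu u -> super_bdry n Om lam nu (fun y => - u y).
Proof. intros [_ [_ Hb]] x0 V phi G H Hx0 HV HKV HC Heq Hlt.
 specialize (Hb x0 V (fun y => - phi y) (fun y i => - G y i) (fun y i j => - H y i j) Hx0 HV HKV (C2_opp n V phi G H HC)).
 assert (Rmin (Eop n lam (- phi x0) (fun i => - G x0 i) (fun i j => - H x0 i j)) (dot n (fun i => - G x0 i) (nu x0)) <= 0).
 { apply Hb. rewrite Heq; ring. intros x Hx Hne. specialize (Hlt x Hx Hne). lra. }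
 rewrite Eop_neg_opp in H0.
 replace (dot n (fun i => - G x0 i) (nu x0)) with (- dot n (G x0) (nu x0)) in H0
   by (unfold dot; replace (- rsum n (fun i => G x0 i * nu x0 i)) with (-1 * rsum n (fun i => G x0 i * nu x0 i)) by ring;
       rewrite <- rsum_scal; apply rsum_ext; intros; ring).
 unfold Rmin, Rmax in *. repeat destruct (Rle_dec _ _); lra. Qed.

Lemma lim_le b c d : 0 <= d -> (forall k, b < k -> c <= k * d) -> c <= b * d.
Proof. intros Hd H. apply Rnot_lt_le; intros Hlt. set (g := (c - b * d) / (2 * (d + 1))).
 assert (Hg : 0 < g) by (unfold g; apply Rdiv_lt_0_compat; lra).
 specialize (H (b + g) ltac:(lra)).
 assert (g * d < c - b * d). { unfold g. replace ((c - b * d) / (2 * (d + 1)) * d) with ((c - b * d) * (d / (2 * (d + 1)))) by (field; lra).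
   assert (d / (2 * (d + 1)) < 1) by (apply Rmult_lt_reg_r with (2 * (d + 1)); [lra|]; unfold Rdiv; rewrite Rmult_assoc, Rinv_l; lra).
   assert (0 < c - b * d) by lra. 
   assert ((c - b * d) * (d / (2 * (d + 1))) < (c - b * d) * 1) by (apply Rmult_lt_compat_l; lra). lra. }
 lra. Qed.

Theorem proposition1 (n : nat) (Om : pt -> Prop) (rho : pt -> R)
    (Drho : list nat -> pt -> R) (lam : R) (u : pt -> R) :
  open_in_Rn n Om -> bounded_in_Rn n Om -> convex_in_Rn n Om ->
  defining_fn n Om rho Drho ->
  0 < lam ->
  visc_solution n Om lam (outer_normal n Drho) u ->
  (exists x y, clos_in_Rn n Om x /\ clos_in_Rn n Om y /\ u x <> u y) ->
  forall diam, is_lub (fun r => exists x y, Om x /\ Om y /\ r = distn n x y) diam ->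
  2 / diam <= lam.
Proof. intros Hopen [B HB] Hconv Hdef Hlam [Hcont [Hsub Hsup]] [xa [xb [Ka [Kb Hne]]]] diam Hlub.
 set (K := clos_in_Rn n Om) in *.
 assert (Hdiam := K_diam n Om diam Hlub).
 assert (Hcontn : forall x, K x -> cont_at n K (fun y => - u y) x) by (intros; apply cont_opp; auto).
 destruct (EVT_min n Om B (fun y => - u y) HB (ex_intro _ xa Ka) Hcontn) as [x1 [K1 H1]].
 destruct (EVT_min n Om B u HB (ex_intro _ xa Ka) Hcont) as [x2 [K2 H2]].
 assert (Hmax : forall x, K x -> u x <= u x1) by (intros x Kx; specialize (H1 x Kx); lra).
 set (M := u x1) in *. set (mm := u x2) in *.
 assert (HMm : mm < M). { pose proof (Hmax xa Ka); pose proof (Hmax xb Kb); pose proof (H2 xa Ka); pose proof (H2 xb Kb).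
   apply Rnot_le_lt; intros Hle. apply Hne. lra. }
 destruct Hsup as [_ [Hsi Hsb]].
 assert (HD0 : 0 <= diam). { pose proof (Hdiam xa xa Ka Ka). rewrite distn_self in H. auto. }
 assert (B1 : M - mm <= lam * Rmax 0 (- mm) * diam).
 { apply lim_le; auto. intros k Hk.
   apply (bound_main n Om rho Drho lam u B diam x1 x2 Hopen Hconv Hdef HB Hdiam Hcont Hsi Hsb Hlam K1 K2 Hmax H2 k Hk). }
 assert (B2 : - mm - - M <= lam * Rmax 0 (- - M) * diam).
 { apply lim_le; auto. intros k Hk.
   apply (bound_main n Om rho Drho lam (fun y => - u y) B diam x2 x1 Hopen Hconv Hdef HB Hdiam Hcontn
     (sub_to_super_int _ _ _ _ _ Hsub) (sub_to_super_bdry _ _ _ _ _ Hsub) Hlam K2 K1).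
   intros x Kx; specialize (H2 x Kx); unfold mm in H2. lra.
   intros x Kx; specialize (H1 x Kx); unfold M in H1; lra. auto. }
 rewrite Ropp_involutive in B2.
 assert (Hm : 0 < - mm). { apply Rnot_le_lt; intros Hle. rewrite Rmax_left in B1 by lra. lra. }
 assert (HM : 0 < M). { apply Rnot_le_lt; intros Hle. rewrite Rmax_left in B2 by lra. lra. }
 rewrite Rmax_right in B1 by lra. rewrite Rmax_right in B2 by lra.
 assert (Hd : 0 < diam). { destruct HD0; auto. subst diam. rewrite Rmult_0_r in B1. lra. }
 assert (Hld : 2 <= lam * diam).
 { destruct (Rle_dec (- mm) M).
   - assert (2 * (- mm) <= (lam * diam) * (- mm)) by lra.
     apply Rmult_le_reg_r with (- mm); lra.
   - assert (2 * M <= (lam * diam) * M) by lra.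
     apply Rmult_le_reg_r with M; lra. }
 apply Rmult_le_reg_r with diam; auto. unfold Rdiv. rewrite Rmult_assoc, Rinv_l by lra. lra. Qed.
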